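(* Let $K$ be the $2$-uniform tiling of the plane whose vertex types are $[3^1,4^2,6^1]$ and $[3^1,4^1,6^1,4^1]$. If $X$ is a map on the torus that is a quotient $X=K/\Gamma$ of $K$, then the vertices of $X$ form at most $9$ orbits under ${\rm Aut}(X)$.
   Context: A map is a polyhedral map: a cellular embedding of a connected graph in a closed surface such that the intersection of any two distinct faces is empty, a single vertex, or a single edge. For a vertex $u$, the faces containing $u$ form a cyclic sequence (the face-cycle at $u$); if this cyclic sequence consists of consecutive blocks of $n_1$ $p_1$-gons, then $n_2$ $p_2$-gons, ..., then $n_k$ $p_k$-gons, with cyclically consecutive $p_i$ distinct, then $u$ is said to have type $[p_1^{n_1},\dots,p_k^{n_k}]$ (defined up to cyclic shift and reversal). A $2$-uniform tiling is an edge-to-edge tiling of the Euclidean plane $\mathbb{R}^2$ by regular polygons whose symmetry group has exactly two orbits on the set of vertices; viewed as a map on the plane, its vertices have (at most) two types, listed as $[W;Z]$. (Up to isomorphism there are exactly $20$ such tilings; there is exactly one with the vertex types named in the claim.) For a map $K$ on the plane, a quotient of $K$ on the torus is a map $X$ on the torus together with a polyhedral covering map $\eta:K\to X$ with $X=K/\Gamma$, where $\Gamma\le {\rm Aut}(K)$ is a subgroup acting without fixed vertices, edges or faces and $K/\Gamma$ is homeomorphic to the torus. ${\rm Aut}(X)$ denotes the automorphism group of the map $X$, acting on its vertex set $V(X)$. *)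

(* Defs.v *)
From mathcomp Require Import all_boot all_order all_algebra all_fingroup.
From Stdlib Require Import Relations.
Set Implicit Arguments. Unset Strict Implicit. Unset Printing Implicit Defensive.
Import GRing.Theory Num.Theory.

(* Maps are encoded combinatorially by their flags: a map with flag set F is  *)
(* given by three involutions r0 r1 r2 : F -> F (r0 changes the vertex of a   *)
(* flag, r1 its edge, r2 its face).  Vertices, edges and faces are the orbits *)
(* of <r1,r2>, <r0,r2> and <r0,r1> respectively.                              *)

(* K is doubly periodic.  A flag of K is (a, b, k): a translate by a*A + b*B  *)
(* (A, B a basis of the translation lattice) of flag number k of a            *)
(* fundamental cell.  The fundamental cell consists of 18 faces (6 triangles, *)
(* 9 squares, 3 hexagons; faces numbered 0..17 with sizes faceK_sizes), 18    *)
(* vertices and 36 edges, hence 144 flags; flag number k of the cell is the   *)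
(* triple (face f, vertex position i in the counterclockwise boundary of f,   *)
(* direction d in {0,1}) listed lexicographically.  The tables below were     *)
(* generated from the geometric tiling (a hexagon surrounded by 6 squares     *)
(* and 6 triangles forming a dodecagonal patch; these patches are placed as   *)
(* the dodecagons of the 4.6.12 tiling, each patch square facing a square of  *)
(* the 4.6.12 tiling).  Lemma K_vertex_types below checks by computation that *)
(* every vertex of K has type [3,4,4,6] or [3,4,6,4].                         *)

Definition faceK_sizes : seq nat :=
  [:: 3; 3; 3; 3; 3; 3; 4; 4; 4; 4; 4; 4; 4; 4; 4; 6; 6; 6]%N.

Local Open Scope ring_scope.
Definition r0_tab : seq (int * int * nat) := [::
  (0, 0, 3%N); (0, 0, 4%N); (0, 0, 5%N); (0, 0, 0%N); (0, 0, 1%N); (0, 0, 2%N);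
  (0, 0, 9%N); (0, 0, 10%N); (0, 0, 11%N); (0, 0, 6%N); (0, 0, 7%N); (0, 0, 8%N);
  (0, 0, 15%N); (0, 0, 16%N); (0, 0, 17%N); (0, 0, 12%N); (0, 0, 13%N); (0, 0, 14%N);
  (0, 0, 21%N); (0, 0, 22%N); (0, 0, 23%N); (0, 0, 18%N); (0, 0, 19%N); (0, 0, 20%N);
  (0, 0, 27%N); (0, 0, 28%N); (0, 0, 29%N); (0, 0, 24%N); (0, 0, 25%N); (0, 0, 26%N);
  (0, 0, 33%N); (0, 0, 34%N); (0, 0, 35%N); (0, 0, 30%N); (0, 0, 31%N); (0, 0, 32%N);
  (0, 0, 39%N); (0, 0, 42%N); (0, 0, 41%N); (0, 0, 36%N); (0, 0, 43%N); (0, 0, 38%N);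
  (0, 0, 37%N); (0, 0, 40%N); (0, 0, 47%N); (0, 0, 50%N); (0, 0, 49%N); (0, 0, 44%N);
  (0, 0, 51%N); (0, 0, 46%N); (0, 0, 45%N); (0, 0, 48%N); (0, 0, 55%N); (0, 0, 58%N);
  (0, 0, 57%N); (0, 0, 52%N); (0, 0, 59%N); (0, 0, 54%N); (0, 0, 53%N); (0, 0, 56%N);
  (0, 0, 63%N); (0, 0, 66%N); (0, 0, 65%N); (0, 0, 60%N); (0, 0, 67%N); (0, 0, 62%N);
  (0, 0, 61%N); (0, 0, 64%N); (0, 0, 71%N); (0, 0, 74%N); (0, 0, 73%N); (0, 0, 68%N);
  (0, 0, 75%N); (0, 0, 70%N); (0, 0, 69%N); (0, 0, 72%N); (0, 0, 79%N); (0, 0, 82%N);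
  (0, 0, 81%N); (0, 0, 76%N); (0, 0, 83%N); (0, 0, 78%N); (0, 0, 77%N); (0, 0, 80%N);
  (0, 0, 87%N); (0, 0, 90%N); (0, 0, 89%N); (0, 0, 84%N); (0, 0, 91%N); (0, 0, 86%N);
  (0, 0, 85%N); (0, 0, 88%N); (0, 0, 95%N); (0, 0, 98%N); (0, 0, 97%N); (0, 0, 92%N);
  (0, 0, 99%N); (0, 0, 94%N); (0, 0, 93%N); (0, 0, 96%N); (0, 0, 103%N); (0, 0, 106%N);
  (0, 0, 105%N); (0, 0, 100%N); (0, 0, 107%N); (0, 0, 102%N); (0, 0, 101%N); (0, 0, 104%N);
  (0, 0, 111%N); (0, 0, 118%N); (0, 0, 113%N); (0, 0, 108%N); (0, 0, 115%N); (0, 0, 110%N);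
  (0, 0, 117%N); (0, 0, 112%N); (0, 0, 119%N); (0, 0, 114%N); (0, 0, 109%N); (0, 0, 116%N);
  (0, 0, 123%N); (0, 0, 130%N); (0, 0, 125%N); (0, 0, 120%N); (0, 0, 127%N); (0, 0, 122%N);
  (0, 0, 129%N); (0, 0, 124%N); (0, 0, 131%N); (0, 0, 126%N); (0, 0, 121%N); (0, 0, 128%N);
  (0, 0, 135%N); (0, 0, 142%N); (0, 0, 137%N); (0, 0, 132%N); (0, 0, 139%N); (0, 0, 134%N);
  (0, 0, 141%N); (0, 0, 136%N); (0, 0, 143%N); (0, 0, 138%N); (0, 0, 133%N); (0, 0, 140%N)
].

Definition r1_tab : seq (int * int * nat) := [::
  (0, 0, 1%N); (0, 0, 0%N); (0, 0, 3%N); (0, 0, 2%N); (0, 0, 5%N); (0, 0, 4%N);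
  (0, 0, 7%N); (0, 0, 6%N); (0, 0, 9%N); (0, 0, 8%N); (0, 0, 11%N); (0, 0, 10%N);
  (0, 0, 13%N); (0, 0, 12%N); (0, 0, 15%N); (0, 0, 14%N); (0, 0, 17%N); (0, 0, 16%N);
  (0, 0, 19%N); (0, 0, 18%N); (0, 0, 21%N); (0, 0, 20%N); (0, 0, 23%N); (0, 0, 22%N);
  (0, 0, 25%N); (0, 0, 24%N); (0, 0, 27%N); (0, 0, 26%N); (0, 0, 29%N); (0, 0, 28%N);
  (0, 0, 31%N); (0, 0, 30%N); (0, 0, 33%N); (0, 0, 32%N); (0, 0, 35%N); (0, 0, 34%N);
  (0, 0, 37%N); (0, 0, 36%N); (0, 0, 39%N); (0, 0, 38%N); (0, 0, 41%N); (0, 0, 40%N);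
  (0, 0, 43%N); (0, 0, 42%N); (0, 0, 45%N); (0, 0, 44%N); (0, 0, 47%N); (0, 0, 46%N);
  (0, 0, 49%N); (0, 0, 48%N); (0, 0, 51%N); (0, 0, 50%N); (0, 0, 53%N); (0, 0, 52%N);
  (0, 0, 55%N); (0, 0, 54%N); (0, 0, 57%N); (0, 0, 56%N); (0, 0, 59%N); (0, 0, 58%N);
  (0, 0, 61%N); (0, 0, 60%N); (0, 0, 63%N); (0, 0, 62%N); (0, 0, 65%N); (0, 0, 64%N);
  (0, 0, 67%N); (0, 0, 66%N); (0, 0, 69%N); (0, 0, 68%N); (0, 0, 71%N); (0, 0, 70%N);
  (0, 0, 73%N); (0, 0, 72%N); (0, 0, 75%N); (0, 0, 74%N); (0, 0, 77%N); (0, 0, 76%N);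
  (0, 0, 79%N); (0, 0, 78%N); (0, 0, 81%N); (0, 0, 80%N); (0, 0, 83%N); (0, 0, 82%N);
  (0, 0, 85%N); (0, 0, 84%N); (0, 0, 87%N); (0, 0, 86%N); (0, 0, 89%N); (0, 0, 88%N);
  (0, 0, 91%N); (0, 0, 90%N); (0, 0, 93%N); (0, 0, 92%N); (0, 0, 95%N); (0, 0, 94%N);
  (0, 0, 97%N); (0, 0, 96%N); (0, 0, 99%N); (0, 0, 98%N); (0, 0, 101%N); (0, 0, 100%N);
  (0, 0, 103%N); (0, 0, 102%N); (0, 0, 105%N); (0, 0, 104%N); (0, 0, 107%N); (0, 0, 106%N);
  (0, 0, 109%N); (0, 0, 108%N); (0, 0, 111%N); (0, 0, 110%N); (0, 0, 113%N); (0, 0, 112%N);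
  (0, 0, 115%N); (0, 0, 114%N); (0, 0, 117%N); (0, 0, 116%N); (0, 0, 119%N); (0, 0, 118%N);
  (0, 0, 121%N); (0, 0, 120%N); (0, 0, 123%N); (0, 0, 122%N); (0, 0, 125%N); (0, 0, 124%N);
  (0, 0, 127%N); (0, 0, 126%N); (0, 0, 129%N); (0, 0, 128%N); (0, 0, 131%N); (0, 0, 130%N);
  (0, 0, 133%N); (0, 0, 132%N); (0, 0, 135%N); (0, 0, 134%N); (0, 0, 137%N); (0, 0, 136%N);
  (0, 0, 139%N); (0, 0, 138%N); (0, 0, 141%N); (0, 0, 140%N); (0, 0, 143%N); (0, 0, 142%N)
].

Definition r2_tab : seq (int * int * nat) := [::
  (0, 0, 129%N); (0, 0, 60%N); (0, 0, 45%N); (0, 0, 126%N); (0, 0, 63%N); (0, 0, 50%N);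
  (0, 0, 75%N); (0, 0, 122%N); (0, 0, 37%N); (0, 0, 72%N); (0, 0, 125%N); (0, 0, 42%N);
  (0, 1, 67%N); (0, 0, 136%N); (0, 0, 71%N); (0, 1, 64%N); (0, 0, 139%N); (0, 0, 68%N);
  (0, 0, 107%N); (0, 0, 92%N); (0, 0, 121%N); (0, 0, 104%N); (0, 0, 95%N); (0, 0, 130%N);
  (0, 0, 143%N); (1, 0, 46%N); (0, 0, 103%N); (0, 0, 140%N); (1, 0, 49%N); (0, 0, 100%N);
  (0, 1, 99%N); (1, 0, 38%N); (0, 0, 135%N); (0, 1, 96%N); (1, 0, 41%N); (0, 0, 132%N);
  (0, 1, 119%N); (0, 0, 8%N); (-1, 0, 31%N); (0, 1, 116%N); (0, 0, 55%N); (-1, 0, 34%N);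
  (0, 0, 11%N); (0, 0, 52%N); (0, 0, 59%N); (0, 0, 2%N); (-1, 0, 25%N); (0, 0, 56%N);
  (0, 0, 113%N); (-1, 0, 28%N); (0, 0, 5%N); (0, 0, 110%N); (0, 0, 43%N); (0, 0, 124%N);
  (-1, 0, 133%N); (0, 0, 40%N); (0, 0, 47%N); (-1, 0, 142%N); (0, 0, 127%N); (0, 0, 44%N);
  (0, 0, 1%N); (0, 0, 78%N); (0, 0, 111%N); (0, 0, 4%N); (0, -1, 15%N); (0, 0, 108%N);
  (0, 0, 81%N); (0, -1, 12%N); (0, 0, 17%N); (0, 0, 86%N); (0, 1, 109%N); (0, 0, 14%N);
  (0, 0, 9%N); (0, 1, 118%N); (0, 0, 89%N); (0, 0, 6%N); (0, 0, 131%N); (0, 0, 94%N);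
  (0, 0, 61%N); (0, 0, 128%N); (0, -1, 137%N); (0, 0, 66%N); (0, 0, 97%N); (0, -1, 134%N);
  (0, 0, 141%N); (0, 0, 102%N); (0, 0, 69%N); (0, 0, 138%N); (0, 0, 123%N); (0, 0, 74%N);
  (0, 0, 105%N); (0, 0, 120%N); (0, 0, 19%N); (1, 0, 114%N); (0, 0, 77%N); (0, 0, 22%N);
  (0, -1, 33%N); (0, 0, 82%N); (1, 0, 117%N); (0, -1, 30%N); (0, 0, 29%N); (1, 0, 112%N);
  (0, 0, 85%N); (0, 0, 26%N); (0, 0, 21%N); (0, 0, 90%N); (1, 0, 115%N); (0, 0, 18%N);
  (0, 0, 65%N); (0, -1, 70%N); (0, 0, 51%N); (0, 0, 62%N); (-1, 0, 101%N); (0, 0, 48%N);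
  (-1, 0, 93%N); (-1, 0, 106%N); (0, -1, 39%N); (-1, 0, 98%N); (0, -1, 73%N); (0, -1, 36%N);
  (0, 0, 91%N); (0, 0, 20%N); (0, 0, 7%N); (0, 0, 88%N); (0, 0, 53%N); (0, 0, 10%N);
  (0, 0, 3%N); (0, 0, 58%N); (0, 0, 79%N); (0, 0, 0%N); (0, 0, 23%N); (0, 0, 76%N);
  (0, 0, 35%N); (1, 0, 54%N); (0, 1, 83%N); (0, 0, 32%N); (0, 0, 13%N); (0, 1, 80%N);
  (0, 0, 87%N); (0, 0, 16%N); (0, 0, 27%N); (0, 0, 84%N); (1, 0, 57%N); (0, 0, 24%N)
].

Local Close Scope ring_scope.

Definition flagK : Type := (int * int * 'I_144)%type.

Definition applyK (tab : seq (int * int * nat)) (x : flagK) : flagK :=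
  let: (a, b, k) := x in
  let: (da, db, k') := nth (0%R, 0%R, 0%N) tab k in
  ((a + da)%R, (b + db)%R, Ordinal (ltn_pmod k' (isT : (0 < 144)%N))).

Definition r0K : flagK -> flagK := applyK r0_tab.
Definition r1K : flagK -> flagK := applyK r1_tab.
Definition r2K : flagK -> flagK := applyK r2_tab.

Definition step2 (T : Type) (f g : T -> T) (x y : T) : Prop := y = f x \/ y = g x.

Definition same_orbit (T : Type) (f g : T -> T) : T -> T -> Prop :=
  clos_refl_trans T (step2 f g).

Definition same_vertexK := same_orbit r1K r2K.
Definition same_edgeK   := same_orbit r0K r2K.
Definition same_faceK   := same_orbit r0K r1K.

Definition is_autK (phi : flagK -> flagK) : Prop :=
  bijective phi /\
  forall x, phi (r0K x) = r0K (phi x) /\ phi (r1K x) = r1K (phi x) /\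
            phi (r2K x) = r2K (phi x).

Definition is_subgroup_AutK (Gamma : (flagK -> flagK) -> Prop) : Prop :=
  [/\ forall g, Gamma g -> is_autK g,
      exists e, Gamma e /\ forall x, e x = x,
      forall g h, Gamma g -> Gamma h ->
        exists k, Gamma k /\ forall x, k x = g (h x)
    & forall g, Gamma g -> exists k, Gamma k /\ forall x, k (g x) = x].

Definition acts_without_fixed_cells (Gamma : (flagK -> flagK) -> Prop) : Prop :=
  forall g, Gamma g -> (exists x, g x <> x) ->
    forall x, ~ same_vertexK x (g x) /\ ~ same_edgeK x (g x) /\
              ~ same_faceK x (g x).

Section FiniteMaps.
Variables (F : finType) (s0 s1 s2 : F -> F).

Definition orb_rel (f g : F -> F) : rel F := [rel x y | (y == f x) || (y == g x)].
Definition cell (f g : F -> F) (x : F) : {set F} := [set y | connect (orb_rel f g) x y].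

Definition vertex_of := cell s1 s2.
Definition edge_of   := cell s0 s2.
Definition face_of   := cell s0 s1.

Definition verticesX : {set {set F}} := [set vertex_of x | x : F].
Definition edgesX    : {set {set F}} := [set edge_of x | x : F].
Definition facesX    : {set {set F}} := [set face_of x | x : F].

Definition is_flag_map : Prop :=
  [/\ forall x, s0 (s0 x) = x /\ s1 (s1 x) = x /\ s2 (s2 x) = x,
      forall x, s0 x <> x /\ s1 x <> x /\ s2 x <> x,
      forall x, s0 (s2 x) = s2 (s0 x) /\ s0 (s2 x) <> x
    & forall x y, connect [rel u v | [|| v == s0 u, v == s1 u | v == s2 u]] x y].

Definition meets (A B : {set F}) : bool := A :&: B != set0.

Definition polyhedral : Prop :=
  forall A B, A \in facesX -> B \in facesX -> A != B ->
    let CV := [set V in verticesX | meets V A && meets V B] in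
    let CE := [set E in edgesX | meets E A && meets E B] in
    (CE = set0 /\ (#|CV| <= 1)%N) \/
    (exists2 E, E \in edgesX &
        CE = [set E] /\ CV = [set V in verticesX | meets V E]).

Definition orientable : Prop :=
  exists c : F -> bool, forall x,
    [/\ c (s0 x) = ~~ c x, c (s1 x) = ~~ c x & c (s2 x) = ~~ c x].

Definition on_torus : Prop :=
  orientable /\ (#|verticesX| + #|facesX| = #|edgesX|)%N.

Definition is_autX (phi : {perm F}) : bool :=
  [forall x, [&& phi (s0 x) == s0 (phi x), phi (s1 x) == s1 (phi x)
               & phi (s2 x) == s2 (phi x)]].

Definition vertex_aut_orbit (x : F) : {set F} :=
  [set y | [exists phi : {perm F}, is_autX phi && (y \in vertex_of (phi x))]].

Definition n_vertex_orbits : nat := #|[set vertex_aut_orbit x | x : F]|.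

End FiniteMaps.

Definition is_quotient_of_K (Gamma : (flagK -> flagK) -> Prop)
    (F : finType) (s0 s1 s2 : F -> F) (eta : flagK -> F) : Prop :=
  [/\ forall y, exists x, eta x = y,
      forall x, eta (r0K x) = s0 (eta x) /\ eta (r1K x) = s1 (eta x) /\
                eta (r2K x) = s2 (eta x)
    & forall x y, eta x = eta y <-> exists g, Gamma g /\ g x = y].

Definition ord144 (k : nat) : 'I_144 := Ordinal (ltn_pmod k (isT : (0 < 144)%N)).

Definition eqK (x y : flagK) : bool := (x == y :> (int * int * 'I_144)%type).

Fixpoint orbit_len (f : flagK -> flagK) (x y : flagK) (fuel : nat) : nat :=
  match fuel with
  | 0 => 0
  | n.+1 => if eqK (f y) x then 1 else (orbit_len f x (f y) n).+1
  end.

Definition face_sizeK (x : flagK) : nat :=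
  (orbit_len (fun y => r1K (r0K y)) x x 20)%N.

Definition vertex_typeK (x : flagK) : seq nat :=
  [seq face_sizeK (iter i (fun y => r2K (r1K y)) x) | i <- iota 0 4].

Definition type_ok (s : seq nat) : bool :=
  has (fun t => (s == t) || (s == rev t))
    [seq rot i [:: 3; 4; 4; 6]%N | i <- iota 0 4] ||
  has (fun t => (s == t) || (s == rev t))
    [seq rot i [:: 3; 4; 6; 4]%N | i <- iota 0 4].

Lemma K_cell_involutions :
  all (fun k : nat => let x : flagK := (0%R, 0%R, ord144 k) in
         [&& eqK (r0K (r0K x)) x, eqK (r1K (r1K x)) x, eqK (r2K (r2K x)) x,
             ~~ eqK (r0K x) x, ~~ eqK (r1K x) x, ~~ eqK (r2K x) x &
             eqK (r0K (r2K x)) (r2K (r0K x))]) (iota 0 144).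
Proof. by vm_compute. Qed.

Lemma K_vertex_types :
  all (fun k : nat => let x : flagK := (0%R, 0%R, ord144 k) in
         eqK (iter 4 (fun y => r2K (r1K y)) x) x && type_ok (vertex_typeK x))
      (iota 0 144).
Proof. by vm_compute. Qed.

(* Main.v *)
Require Import Defs.
From mathcomp Require Import all_boot all_order all_algebra all_fingroup.
From Stdlib Require Import Relations.
From mathcomp Require Import ring zify.
Set Implicit Arguments. Unset Strict Implicit. Unset Printing Implicit Defensive.
Import GRing.Theory Num.Theory.
Local Open Scope ring_scope.
Definition stp (i : nat) (x : flagK) : flagK :=
  match i with 0%N => r0K x | 1%N => r1K x | _ => r2K x end.
Definition act (w : seq nat) (x : flagK) : flagK := foldl (fun y i => stp i y) x w.
Definition tr (u : int * int) (x : flagK) : flagK :=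
  let: (a, b, k) := x in (a + u.1, b + u.2, k).
Definition x0 : flagK := (0, 0, ord144 0).
Definition commK (f : flagK -> flagK) : Prop :=
  forall x, f (r0K x) = r0K (f x) /\ f (r1K x) = r1K (f x) /\ f (r2K x) = r2K (f x).

Lemma applyK_tr tab u x : applyK tab (tr u x) = tr u (applyK tab x).
Proof.
case: x => [[a b] k]; case: u => p q /=; rewrite /applyK.
by case: (nth _ tab k) => [[da db] k'] /=; rewrite !(addrAC _ p) !(addrAC _ q).
Qed.

Lemma stp_tr i u x : stp i (tr u x) = tr u (stp i x).
Proof. by case: i => [|[|i]] /=; rewrite /r0K /r1K /r2K applyK_tr. Qed.

Lemma act_tr w u x : act w (tr u x) = tr u (act w x).
Proof. by elim: w x => //= i w IH x; rewrite stp_tr IH. Qed.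

Lemma act_cat w1 w2 x : act (w1 ++ w2) x = act w2 (act w1 x).
Proof. by rewrite /act foldl_cat. Qed.

Lemma commK_stp f : commK f -> forall i x, f (stp i x) = stp i (f x).
Proof. by move=> H [|[|i]] x /=; case: (H x) => [? [? ?]]. Qed.

Lemma comm_act f : commK f -> forall w x, f (act w x) = act w (f x).
Proof. by move=> H; elim => //= i w IH x; rewrite IH (commK_stp H). Qed.

Lemma tr_tr u v x : tr u (tr v x) = tr (v.1 + u.1, v.2 + u.2) x.
Proof. by case: x => [[a b] k]; case: u; case: v => /= *; rewrite !addrA. Qed.

Lemma tr0 x : tr (0, 0) x = x.
Proof. by case: x => [[a b] k] /=; rewrite !addr0. Qed.

Lemma tr_inj u : injective (tr u).
Proof.
move=> x y H; have := congr1 (tr (- u.1, - u.2)) H.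
by rewrite !tr_tr !subrr !tr0.
Qed.

Lemma commK_tr u : commK (tr u).
Proof. by move=> x; rewrite /r0K /r1K /r2K !applyK_tr. Qed.

Lemma ord144_val (k : 'I_144) : ord144 k = k.
Proof. by apply: val_inj; rewrite /= modn_small. Qed.
Definition pathK : seq (seq nat) := [::
  [:: ];
  [:: 1%N];
  [:: 0%N; 1%N];
  [:: 0%N];
  [:: 1%N; 0%N];
  [:: 0%N; 1%N; 0%N];
  [:: 0%N; 2%N; 1%N; 0%N; 1%N; 0%N; 2%N; 1%N];
  [:: 0%N; 2%N; 1%N; 0%N; 1%N; 0%N; 2%N];
  [:: 0%N; 2%N; 1%N; 0%N; 1%N; 2%N; 1%N; 0%N];
  [:: 0%N; 2%N; 1%N; 0%N; 1%N; 0%N; 2%N; 1%N; 0%N];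
  [:: 0%N; 2%N; 1%N; 0%N; 1%N; 2%N];
  [:: 0%N; 2%N; 1%N; 0%N; 1%N; 2%N; 1%N];
  [:: 0%N; 2%N; 1%N; 0%N; 1%N; 0%N; 1%N; 2%N; 1%N; 0%N; 1%N; 2%N; 1%N; 0%N; 2%N; 1%N];
  [:: 0%N; 2%N; 1%N; 0%N; 1%N; 0%N; 1%N; 2%N; 1%N; 0%N; 1%N; 2%N; 1%N; 0%N; 2%N];
  [:: 0%N; 2%N; 1%N; 0%N; 1%N; 0%N; 1%N; 2%N; 1%N; 0%N; 2%N; 1%N; 0%N; 2%N];
  [:: 0%N; 2%N; 1%N; 0%N; 1%N; 0%N; 1%N; 2%N; 1%N; 0%N; 2%N; 1%N; 0%N; 2%N; 1%N];
  [:: 0%N; 2%N; 1%N; 0%N; 1%N; 0%N; 1%N; 2%N; 1%N; 0%N; 1%N; 2%N; 1%N; 2%N];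
  [:: 0%N; 2%N; 1%N; 0%N; 1%N; 0%N; 1%N; 2%N; 1%N; 0%N; 2%N; 1%N; 2%N];
  [:: 2%N; 1%N; 0%N; 1%N; 0%N; 2%N; 1%N; 0%N];
  [:: 2%N; 1%N; 0%N; 1%N; 2%N; 1%N; 0%N];
  [:: 2%N; 1%N; 0%N; 1%N; 0%N; 2%N];
  [:: 2%N; 1%N; 0%N; 1%N; 0%N; 2%N; 1%N];
  [:: 2%N; 1%N; 0%N; 1%N; 2%N; 1%N];
  [:: 2%N; 1%N; 0%N; 1%N; 2%N];
  [:: 2%N; 1%N; 0%N; 1%N; 0%N; 1%N; 2%N; 1%N; 0%N; 1%N; 2%N; 1%N; 0%N; 2%N];
  [:: 2%N; 1%N; 0%N; 1%N; 0%N; 1%N; 2%N; 1%N; 0%N; 1%N; 2%N; 1%N; 0%N; 2%N; 1%N];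
  [:: 2%N; 1%N; 0%N; 1%N; 0%N; 1%N; 2%N; 1%N; 0%N; 2%N; 1%N; 2%N];
  [:: 2%N; 1%N; 0%N; 1%N; 0%N; 1%N; 2%N; 1%N; 0%N; 1%N; 2%N; 1%N; 2%N];
  [:: 2%N; 1%N; 0%N; 1%N; 0%N; 1%N; 2%N; 1%N; 0%N; 2%N; 1%N; 0%N; 2%N; 1%N];
  [:: 2%N; 1%N; 0%N; 1%N; 0%N; 1%N; 2%N; 1%N; 0%N; 2%N; 1%N; 0%N; 2%N];
  [:: 0%N; 2%N; 1%N; 0%N; 1%N; 0%N; 1%N; 2%N; 1%N; 0%N; 1%N; 2%N; 1%N; 0%N; 1%N; 0%N; 1%N; 2%N; 1%N; 0%N];
  [:: 2%N; 1%N; 0%N; 1%N; 0%N; 1%N; 2%N; 1%N; 0%N; 1%N; 2%N; 1%N; 0%N; 1%N; 0%N; 1%N; 2%N; 1%N; 0%N];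
  [:: 0%N; 2%N; 1%N; 0%N; 1%N; 0%N; 1%N; 2%N; 1%N; 0%N; 1%N; 2%N; 1%N; 0%N; 1%N; 0%N; 1%N; 2%N];
  [:: 0%N; 2%N; 1%N; 0%N; 1%N; 0%N; 1%N; 2%N; 1%N; 0%N; 1%N; 2%N; 1%N; 0%N; 1%N; 0%N; 1%N; 2%N; 1%N];
  [:: 2%N; 1%N; 0%N; 1%N; 0%N; 1%N; 2%N; 1%N; 0%N; 1%N; 2%N; 1%N; 0%N; 1%N; 0%N; 1%N; 2%N; 1%N];
  [:: 2%N; 1%N; 0%N; 1%N; 0%N; 1%N; 2%N; 1%N; 0%N; 1%N; 2%N; 1%N; 0%N; 1%N; 0%N; 1%N; 2%N];
  [:: 0%N; 2%N; 1%N; 0%N; 1%N; 2%N; 1%N; 0%N; 2%N; 1%N];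
  [:: 0%N; 2%N; 1%N; 0%N; 1%N; 2%N; 1%N; 0%N; 2%N];
  [:: 0%N; 2%N; 1%N; 0%N; 2%N; 1%N; 0%N; 2%N; 1%N; 0%N];
  [:: 0%N; 2%N; 1%N; 0%N; 1%N; 2%N; 1%N; 0%N; 2%N; 1%N; 0%N];
  [:: 0%N; 2%N; 1%N; 0%N; 2%N; 1%N; 0%N; 2%N];
  [:: 0%N; 2%N; 1%N; 0%N; 2%N; 1%N; 0%N; 2%N; 1%N];
  [:: 0%N; 2%N; 1%N; 0%N; 1%N; 2%N; 1%N; 2%N];
  [:: 0%N; 2%N; 1%N; 0%N; 2%N; 1%N; 2%N];
  [:: 0%N; 1%N; 2%N; 1%N];
  [:: 0%N; 1%N; 2%N];
  [:: 0%N; 1%N; 2%N; 1%N; 0%N; 1%N];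
  [:: 0%N; 1%N; 2%N; 1%N; 0%N];
  [:: 0%N; 1%N; 0%N; 2%N; 1%N; 0%N];
  [:: 0%N; 1%N; 0%N; 2%N; 1%N; 0%N; 1%N];
  [:: 0%N; 1%N; 0%N; 2%N];
  [:: 0%N; 1%N; 0%N; 2%N; 1%N];
  [:: 0%N; 2%N; 1%N; 0%N; 2%N; 1%N];
  [:: 0%N; 2%N; 1%N; 0%N; 2%N];
  [:: 0%N; 1%N; 2%N; 1%N; 0%N; 2%N; 1%N; 0%N];
  [:: 0%N; 2%N; 1%N; 0%N; 2%N; 1%N; 0%N];
  [:: 0%N; 1%N; 2%N; 1%N; 0%N; 2%N];
  [:: 0%N; 1%N; 2%N; 1%N; 0%N; 2%N; 1%N];
  [:: 0%N; 2%N; 1%N; 2%N];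
  [:: 0%N; 1%N; 2%N; 1%N; 2%N];
  [:: 1%N; 2%N];
  [:: 1%N; 2%N; 1%N];
  [:: 1%N; 0%N; 2%N; 1%N];
  [:: 1%N; 0%N; 2%N];
  [:: 1%N; 0%N; 2%N; 1%N; 0%N; 1%N];
  [:: 1%N; 0%N; 2%N; 1%N; 0%N];
  [:: 1%N; 2%N; 1%N; 0%N];
  [:: 1%N; 2%N; 1%N; 0%N; 1%N];
  [:: 0%N; 2%N; 1%N; 0%N; 1%N; 0%N; 1%N; 2%N; 1%N; 0%N; 2%N; 1%N];
  [:: 0%N; 2%N; 1%N; 0%N; 1%N; 0%N; 1%N; 2%N; 1%N; 0%N; 2%N];
  [:: 0%N; 2%N; 1%N; 0%N; 1%N; 0%N; 2%N; 1%N; 0%N; 2%N; 1%N; 0%N];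
  [:: 0%N; 2%N; 1%N; 0%N; 1%N; 0%N; 1%N; 2%N; 1%N; 0%N; 2%N; 1%N; 0%N];
  [:: 0%N; 2%N; 1%N; 0%N; 1%N; 0%N; 2%N; 1%N; 0%N; 2%N];
  [:: 0%N; 2%N; 1%N; 0%N; 1%N; 0%N; 2%N; 1%N; 0%N; 2%N; 1%N];
  [:: 0%N; 2%N; 1%N; 0%N; 1%N; 0%N; 1%N; 2%N; 1%N; 2%N];
  [:: 0%N; 2%N; 1%N; 0%N; 1%N; 0%N; 2%N; 1%N; 2%N];
  [:: 2%N; 1%N; 0%N; 2%N];
  [:: 2%N; 1%N; 0%N; 2%N; 1%N];
  [:: 1%N; 2%N; 1%N; 2%N];
  [:: 2%N; 1%N; 2%N];
  [:: 1%N; 2%N; 1%N; 0%N; 2%N; 1%N];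
  [:: 1%N; 2%N; 1%N; 0%N; 2%N];
  [:: 2%N; 1%N; 0%N; 2%N; 1%N; 0%N];
  [:: 1%N; 2%N; 1%N; 0%N; 2%N; 1%N; 0%N];
  [:: 2%N; 1%N; 0%N; 1%N; 0%N; 1%N; 2%N; 1%N; 0%N; 1%N];
  [:: 2%N; 1%N; 0%N; 1%N; 0%N; 1%N; 2%N; 1%N; 0%N];
  [:: 0%N; 2%N; 1%N; 0%N; 1%N; 0%N; 1%N; 2%N; 1%N; 0%N];
  [:: 0%N; 2%N; 1%N; 0%N; 1%N; 0%N; 1%N; 2%N; 1%N; 0%N; 1%N];
  [:: 0%N; 2%N; 1%N; 0%N; 1%N; 0%N; 1%N; 2%N];
  [:: 0%N; 2%N; 1%N; 0%N; 1%N; 0%N; 1%N; 2%N; 1%N];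
  [:: 2%N; 1%N; 0%N; 1%N; 0%N; 1%N; 2%N; 1%N];
  [:: 2%N; 1%N; 0%N; 1%N; 0%N; 1%N; 2%N];
  [:: 2%N; 1%N; 0%N; 1%N; 2%N; 1%N; 0%N; 2%N];
  [:: 2%N; 1%N; 0%N; 1%N; 2%N; 1%N; 0%N; 2%N; 1%N];
  [:: 2%N; 1%N; 0%N; 2%N; 1%N; 2%N];
  [:: 2%N; 1%N; 0%N; 1%N; 2%N; 1%N; 2%N];
  [:: 2%N; 1%N; 0%N; 2%N; 1%N; 0%N; 2%N; 1%N];
  [:: 2%N; 1%N; 0%N; 2%N; 1%N; 0%N; 2%N];
  [:: 2%N; 1%N; 0%N; 1%N; 2%N; 1%N; 0%N; 2%N; 1%N; 0%N];
  [:: 2%N; 1%N; 0%N; 2%N; 1%N; 0%N; 2%N; 1%N; 0%N];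
  [:: 2%N; 1%N; 0%N; 1%N; 0%N; 1%N; 2%N; 1%N; 0%N; 2%N; 1%N; 0%N];
  [:: 2%N; 1%N; 0%N; 1%N; 0%N; 2%N; 1%N; 0%N; 2%N; 1%N; 0%N];
  [:: 2%N; 1%N; 0%N; 1%N; 0%N; 1%N; 2%N; 1%N; 0%N; 2%N];
  [:: 2%N; 1%N; 0%N; 1%N; 0%N; 1%N; 2%N; 1%N; 0%N; 2%N; 1%N];
  [:: 2%N; 1%N; 0%N; 1%N; 0%N; 2%N; 1%N; 2%N];
  [:: 2%N; 1%N; 0%N; 1%N; 0%N; 1%N; 2%N; 1%N; 2%N];
  [:: 2%N; 1%N; 0%N; 1%N; 0%N; 2%N; 1%N; 0%N; 2%N; 1%N];
  [:: 2%N; 1%N; 0%N; 1%N; 0%N; 2%N; 1%N; 0%N; 2%N];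
  [:: 1%N; 0%N; 2%N; 1%N; 0%N; 2%N];
  [:: 1%N; 0%N; 2%N; 1%N; 0%N; 2%N; 1%N];
  [:: 0%N; 1%N; 0%N; 2%N; 1%N; 2%N];
  [:: 1%N; 0%N; 2%N; 1%N; 2%N];
  [:: 0%N; 1%N; 0%N; 2%N; 1%N; 0%N; 2%N; 1%N];
  [:: 0%N; 1%N; 0%N; 2%N; 1%N; 0%N; 2%N];
  [:: 0%N; 1%N; 0%N; 2%N; 1%N; 0%N; 2%N; 1%N; 0%N; 1%N];
  [:: 0%N; 1%N; 0%N; 2%N; 1%N; 0%N; 2%N; 1%N; 0%N];
  [:: 1%N; 0%N; 2%N; 1%N; 0%N; 2%N; 1%N; 0%N; 1%N; 0%N];
  [:: 0%N; 1%N; 0%N; 2%N; 1%N; 0%N; 2%N; 1%N; 0%N; 1%N; 0%N];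
  [:: 1%N; 0%N; 2%N; 1%N; 0%N; 2%N; 1%N; 0%N];
  [:: 1%N; 0%N; 2%N; 1%N; 0%N; 2%N; 1%N; 0%N; 1%N];
  [:: 2%N; 1%N; 0%N; 1%N; 0%N; 1%N];
  [:: 2%N; 1%N; 0%N; 1%N; 0%N];
  [:: 0%N; 2%N; 1%N; 0%N; 1%N; 0%N];
  [:: 0%N; 2%N; 1%N; 0%N; 1%N; 0%N; 1%N];
  [:: 0%N; 2%N; 1%N; 0%N];
  [:: 0%N; 2%N; 1%N; 0%N; 1%N];
  [:: 0%N; 2%N];
  [:: 0%N; 2%N; 1%N];
  [:: 2%N; 1%N];
  [:: 2%N];
  [:: 2%N; 1%N; 0%N; 1%N];
  [:: 2%N; 1%N; 0%N];
  [:: 2%N; 1%N; 0%N; 1%N; 0%N; 1%N; 2%N; 1%N; 0%N; 1%N; 2%N; 1%N; 0%N; 1%N; 0%N; 1%N];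
  [:: 2%N; 1%N; 0%N; 1%N; 0%N; 1%N; 2%N; 1%N; 0%N; 1%N; 2%N; 1%N; 0%N; 1%N; 0%N];
  [:: 0%N; 2%N; 1%N; 0%N; 1%N; 0%N; 1%N; 2%N; 1%N; 0%N; 1%N; 2%N; 1%N; 0%N; 1%N; 0%N];
  [:: 0%N; 2%N; 1%N; 0%N; 1%N; 0%N; 1%N; 2%N; 1%N; 0%N; 1%N; 2%N; 1%N; 0%N; 1%N; 0%N; 1%N];
  [:: 0%N; 2%N; 1%N; 0%N; 1%N; 0%N; 1%N; 2%N; 1%N; 0%N; 1%N; 2%N; 1%N; 0%N];
  [:: 0%N; 2%N; 1%N; 0%N; 1%N; 0%N; 1%N; 2%N; 1%N; 0%N; 1%N; 2%N; 1%N; 0%N; 1%N];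
  [:: 0%N; 2%N; 1%N; 0%N; 1%N; 0%N; 1%N; 2%N; 1%N; 0%N; 1%N; 2%N];
  [:: 0%N; 2%N; 1%N; 0%N; 1%N; 0%N; 1%N; 2%N; 1%N; 0%N; 1%N; 2%N; 1%N];
  [:: 2%N; 1%N; 0%N; 1%N; 0%N; 1%N; 2%N; 1%N; 0%N; 1%N; 2%N; 1%N];
  [:: 2%N; 1%N; 0%N; 1%N; 0%N; 1%N; 2%N; 1%N; 0%N; 1%N; 2%N];
  [:: 2%N; 1%N; 0%N; 1%N; 0%N; 1%N; 2%N; 1%N; 0%N; 1%N; 2%N; 1%N; 0%N; 1%N];
  [:: 2%N; 1%N; 0%N; 1%N; 0%N; 1%N; 2%N; 1%N; 0%N; 1%N; 2%N; 1%N; 0%N]].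
Definition WA : seq nat := [:: 2%N; 1%N; 0%N; 1%N; 0%N; 2%N; 1%N; 0%N; 2%N; 1%N; 0%N; 2%N; 1%N; 0%N; 1%N; 2%N; 1%N; 0%N; 2%N; 1%N].
Definition WAi : seq nat := [:: 0%N; 1%N; 0%N; 2%N; 1%N; 0%N; 2%N; 1%N; 0%N; 1%N; 2%N; 1%N; 0%N; 1%N; 2%N; 1%N; 0%N; 2%N; 1%N; 2%N].
Definition WB : seq nat := [:: 0%N; 2%N; 1%N; 0%N; 1%N; 0%N; 2%N; 1%N; 0%N; 2%N; 1%N; 0%N; 2%N; 1%N; 0%N; 2%N; 1%N; 0%N; 2%N; 1%N].
Definition WBi : seq nat := [:: 1%N; 0%N; 2%N; 1%N; 0%N; 2%N; 1%N; 0%N; 1%N; 2%N; 1%N; 0%N; 1%N; 2%N; 1%N; 0%N; 2%N; 1%N; 0%N; 2%N].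
Definition loopsK : seq (seq nat) := [::
  [:: ];
  [:: 1%N; 2%N; 1%N; 0%N; 1%N; 0%N; 1%N; 0%N; 1%N; 2%N; 0%N; 1%N];
  [:: 1%N; 2%N; 1%N; 0%N; 1%N; 0%N; 1%N; 0%N; 1%N; 2%N; 0%N; 1%N];
  [:: ];
  [:: 0%N; 1%N; 2%N; 1%N; 0%N; 1%N; 0%N; 1%N; 0%N; 1%N; 2%N; 0%N; 1%N; 0%N];
  [:: 0%N; 1%N; 2%N; 1%N; 0%N; 1%N; 0%N; 1%N; 0%N; 1%N; 2%N; 0%N; 1%N; 0%N];
  [:: 1%N; 2%N; 1%N; 0%N; 1%N; 0%N; 1%N; 0%N; 1%N; 2%N; 0%N; 1%N];
  [:: ];
  [:: 0%N; 1%N; 2%N; 1%N; 0%N; 1%N; 0%N; 1%N; 0%N; 1%N; 2%N; 0%N; 1%N; 0%N];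
  [:: 0%N; 1%N; 2%N; 1%N; 0%N; 1%N; 0%N; 1%N; 0%N; 1%N; 2%N; 0%N; 1%N; 0%N];
  [:: ];
  [:: 1%N; 2%N; 1%N; 0%N; 1%N; 0%N; 1%N; 0%N; 1%N; 2%N; 0%N; 1%N];
  [:: 1%N; 2%N; 1%N; 0%N; 1%N; 0%N; 1%N; 0%N; 1%N; 2%N; 0%N; 1%N];
  [:: ];
  [:: 0%N; 1%N; 2%N; 1%N; 0%N; 1%N; 0%N; 1%N; 0%N; 1%N; 2%N; 0%N; 1%N; 0%N];
  [:: 0%N; 1%N; 2%N; 1%N; 0%N; 1%N; 0%N; 1%N; 0%N; 1%N; 2%N; 0%N; 1%N; 0%N];
  [:: ];
  [:: 1%N; 2%N; 1%N; 0%N; 1%N; 0%N; 1%N; 0%N; 1%N; 2%N; 0%N; 1%N];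
  [:: 0%N; 1%N; 2%N; 1%N; 0%N; 1%N; 0%N; 1%N; 0%N; 1%N; 2%N; 0%N; 1%N; 0%N];
  [:: 0%N; 1%N; 2%N; 1%N; 0%N; 1%N; 0%N; 1%N; 0%N; 1%N; 2%N; 0%N; 1%N; 0%N];
  [:: ];
  [:: 1%N; 2%N; 1%N; 0%N; 1%N; 0%N; 1%N; 0%N; 1%N; 2%N; 0%N; 1%N];
  [:: 1%N; 2%N; 1%N; 0%N; 1%N; 0%N; 1%N; 0%N; 1%N; 2%N; 0%N; 1%N];
  [:: ];
  [:: ];
  [:: 1%N; 2%N; 1%N; 0%N; 1%N; 0%N; 1%N; 0%N; 1%N; 2%N; 0%N; 1%N];
  [:: 1%N; 2%N; 1%N; 0%N; 1%N; 0%N; 1%N; 0%N; 1%N; 2%N; 0%N; 1%N];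
  [:: ];
  [:: 0%N; 1%N; 2%N; 1%N; 0%N; 1%N; 0%N; 1%N; 0%N; 1%N; 2%N; 0%N; 1%N; 0%N];
  [:: 0%N; 1%N; 2%N; 1%N; 0%N; 1%N; 0%N; 1%N; 0%N; 1%N; 2%N; 0%N; 1%N; 0%N];
  [:: 0%N; 1%N; 2%N; 1%N; 0%N; 1%N; 0%N; 1%N; 0%N; 1%N; 2%N; 0%N; 1%N; 0%N];
  [:: 0%N; 1%N; 2%N; 1%N; 0%N; 1%N; 0%N; 1%N; 0%N; 1%N; 2%N; 0%N; 1%N; 0%N];
  [:: ];
  [:: 1%N; 2%N; 1%N; 0%N; 1%N; 0%N; 1%N; 0%N; 1%N; 2%N; 0%N; 1%N];
  [:: 1%N; 2%N; 1%N; 0%N; 1%N; 0%N; 1%N; 0%N; 1%N; 2%N; 0%N; 1%N];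
  [:: ];
  [:: 1%N; 0%N; 1%N; 0%N; 1%N; 0%N];
  [:: 1%N; 0%N; 1%N; 0%N; 1%N; 0%N];
  [:: 1%N; 0%N; 1%N; 0%N; 1%N; 0%N];
  [:: 1%N; 0%N; 1%N; 0%N; 1%N; 0%N];
  [:: 1%N; 0%N; 1%N; 0%N; 1%N; 0%N];
  [:: 1%N; 0%N; 1%N; 0%N; 1%N; 0%N];
  [:: 1%N; 0%N; 1%N; 0%N; 1%N; 0%N];
  [:: 1%N; 0%N; 1%N; 0%N; 1%N; 0%N];
  [:: 1%N; 0%N; 1%N; 0%N; 1%N; 0%N];
  [:: 1%N; 0%N; 1%N; 0%N; 1%N; 0%N];
  [:: 1%N; 0%N; 1%N; 0%N; 1%N; 0%N];
  [:: 1%N; 0%N; 1%N; 0%N; 1%N; 0%N];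
  [:: 1%N; 0%N; 1%N; 0%N; 1%N; 0%N];
  [:: 1%N; 0%N; 1%N; 0%N; 1%N; 0%N];
  [:: 1%N; 0%N; 1%N; 0%N; 1%N; 0%N];
  [:: 1%N; 0%N; 1%N; 0%N; 1%N; 0%N];
  [:: 1%N; 0%N; 1%N; 0%N; 1%N; 0%N];
  [:: 1%N; 0%N; 1%N; 0%N; 1%N; 0%N];
  [:: 1%N; 0%N; 1%N; 0%N; 1%N; 0%N];
  [:: 1%N; 0%N; 1%N; 0%N; 1%N; 0%N];
  [:: 1%N; 0%N; 1%N; 0%N; 1%N; 0%N];
  [:: 1%N; 0%N; 1%N; 0%N; 1%N; 0%N];
  [:: 1%N; 0%N; 1%N; 0%N; 1%N; 0%N];
  [:: 1%N; 0%N; 1%N; 0%N; 1%N; 0%N];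
  [:: 1%N; 0%N; 1%N; 0%N; 1%N; 0%N];
  [:: 1%N; 0%N; 1%N; 0%N; 1%N; 0%N];
  [:: 1%N; 0%N; 1%N; 0%N; 1%N; 0%N];
  [:: 1%N; 0%N; 1%N; 0%N; 1%N; 0%N];
  [:: 1%N; 0%N; 1%N; 0%N; 1%N; 0%N];
  [:: 1%N; 0%N; 1%N; 0%N; 1%N; 0%N];
  [:: 1%N; 0%N; 1%N; 0%N; 1%N; 0%N];
  [:: 1%N; 0%N; 1%N; 0%N; 1%N; 0%N];
  [:: 1%N; 0%N; 1%N; 0%N; 1%N; 0%N];
  [:: 1%N; 0%N; 1%N; 0%N; 1%N; 0%N];
  [:: 1%N; 0%N; 1%N; 0%N; 1%N; 0%N];
  [:: 1%N; 0%N; 1%N; 0%N; 1%N; 0%N];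
  [:: 1%N; 0%N; 1%N; 0%N; 1%N; 0%N];
  [:: 1%N; 0%N; 1%N; 0%N; 1%N; 0%N];
  [:: 1%N; 0%N; 1%N; 0%N; 1%N; 0%N];
  [:: 1%N; 0%N; 1%N; 0%N; 1%N; 0%N];
  [:: 1%N; 0%N; 1%N; 0%N; 1%N; 0%N];
  [:: 1%N; 0%N; 1%N; 0%N; 1%N; 0%N];
  [:: 1%N; 0%N; 1%N; 0%N; 1%N; 0%N];
  [:: 1%N; 0%N; 1%N; 0%N; 1%N; 0%N];
  [:: 1%N; 0%N; 1%N; 0%N; 1%N; 0%N];
  [:: 1%N; 0%N; 1%N; 0%N; 1%N; 0%N];
  [:: 1%N; 0%N; 1%N; 0%N; 1%N; 0%N];
  [:: 1%N; 0%N; 1%N; 0%N; 1%N; 0%N];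
  [:: 1%N; 0%N; 1%N; 0%N; 1%N; 0%N];
  [:: 1%N; 0%N; 1%N; 0%N; 1%N; 0%N];
  [:: 1%N; 0%N; 1%N; 0%N; 1%N; 0%N];
  [:: 1%N; 0%N; 1%N; 0%N; 1%N; 0%N];
  [:: 1%N; 0%N; 1%N; 0%N; 1%N; 0%N];
  [:: 1%N; 0%N; 1%N; 0%N; 1%N; 0%N];
  [:: 1%N; 0%N; 1%N; 0%N; 1%N; 0%N];
  [:: 1%N; 0%N; 1%N; 0%N; 1%N; 0%N];
  [:: 1%N; 0%N; 1%N; 0%N; 1%N; 0%N];
  [:: 1%N; 0%N; 1%N; 0%N; 1%N; 0%N];
  [:: 1%N; 0%N; 1%N; 0%N; 1%N; 0%N];
  [:: 1%N; 0%N; 1%N; 0%N; 1%N; 0%N];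
  [:: 1%N; 0%N; 1%N; 0%N; 1%N; 0%N];
  [:: 1%N; 0%N; 1%N; 0%N; 1%N; 0%N];
  [:: 1%N; 0%N; 1%N; 0%N; 1%N; 0%N];
  [:: 1%N; 0%N; 1%N; 0%N; 1%N; 0%N];
  [:: 1%N; 0%N; 1%N; 0%N; 1%N; 0%N];
  [:: 1%N; 0%N; 1%N; 0%N; 1%N; 0%N];
  [:: 1%N; 0%N; 1%N; 0%N; 1%N; 0%N];
  [:: 1%N; 0%N; 1%N; 0%N; 1%N; 0%N];
  [:: 1%N; 0%N; 1%N; 0%N; 1%N; 0%N];
  [:: 1%N; 0%N; 1%N; 0%N; 1%N; 0%N];
  [:: 1%N; 0%N; 1%N; 0%N; 1%N; 0%N];
  [:: 1%N; 0%N; 1%N; 0%N; 1%N; 0%N];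
  [:: 1%N; 0%N; 1%N; 0%N; 1%N; 0%N];
  [:: 1%N; 0%N; 1%N; 0%N; 1%N; 0%N];
  [:: 1%N; 0%N; 1%N; 0%N; 1%N; 0%N];
  [:: 1%N; 0%N; 1%N; 0%N; 1%N; 0%N];
  [:: 1%N; 0%N; 1%N; 0%N; 1%N; 0%N];
  [:: 1%N; 0%N; 1%N; 0%N; 1%N; 0%N];
  [:: 1%N; 0%N; 1%N; 0%N; 1%N; 0%N];
  [:: 1%N; 0%N; 1%N; 0%N; 1%N; 0%N];
  [:: 1%N; 0%N; 1%N; 0%N; 1%N; 0%N];
  [:: 1%N; 0%N; 1%N; 0%N; 1%N; 0%N];
  [:: 1%N; 0%N; 1%N; 0%N; 1%N; 0%N];
  [:: 1%N; 0%N; 1%N; 0%N; 1%N; 0%N];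
  [:: 1%N; 0%N; 1%N; 0%N; 1%N; 0%N];
  [:: 1%N; 0%N; 1%N; 0%N; 1%N; 0%N];
  [:: 1%N; 0%N; 1%N; 0%N; 1%N; 0%N];
  [:: 1%N; 0%N; 1%N; 0%N; 1%N; 0%N];
  [:: 1%N; 0%N; 1%N; 0%N; 1%N; 0%N];
  [:: 1%N; 0%N; 1%N; 0%N; 1%N; 0%N];
  [:: 1%N; 0%N; 1%N; 0%N; 1%N; 0%N];
  [:: 1%N; 0%N; 1%N; 0%N; 1%N; 0%N];
  [:: 1%N; 0%N; 1%N; 0%N; 1%N; 0%N];
  [:: 1%N; 0%N; 1%N; 0%N; 1%N; 0%N];
  [:: 1%N; 0%N; 1%N; 0%N; 1%N; 0%N];
  [:: 1%N; 0%N; 1%N; 0%N; 1%N; 0%N];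
  [:: 1%N; 0%N; 1%N; 0%N; 1%N; 0%N];
  [:: 1%N; 0%N; 1%N; 0%N; 1%N; 0%N];
  [:: 1%N; 0%N; 1%N; 0%N; 1%N; 0%N];
  [:: 1%N; 0%N; 1%N; 0%N; 1%N; 0%N];
  [:: 1%N; 0%N; 1%N; 0%N; 1%N; 0%N];
  [:: 1%N; 0%N; 1%N; 0%N; 1%N; 0%N];
  [:: 1%N; 0%N; 1%N; 0%N; 1%N; 0%N];
  [:: 1%N; 0%N; 1%N; 0%N; 1%N; 0%N];
  [:: 1%N; 0%N; 1%N; 0%N; 1%N; 0%N];
  [:: 1%N; 0%N; 1%N; 0%N; 1%N; 0%N];
  [:: 1%N; 0%N; 1%N; 0%N; 1%N; 0%N];
  [:: 1%N; 0%N; 1%N; 0%N; 1%N; 0%N]].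
Definition pkK : seq bool := [:: false; true; false; true; false; true; false; true; false; true; false; true; false; true; false; true; false; true; false; true; false; true; false; true; false; true; false; true; false; true; false; true; false; true; false; true; false; true; false; true; false; true; false; true; false; true; false; true; false; true; false; true; false; true; false; true; false; true; false; true; false; true; false; true; false; true; false; true; false; true; false; true; false; true; false; true; false; true; false; true; false; true; false; true; false; true; false; true; false; true; false; true; false; true; false; true; false; true; false; true; false; true; false; true; false; true; false; true; false; true; false; true; false; true; false; true; false; true; false; true; false; true; false; true; false; true; false; true; false; true; false; true; false; true; false; true; false; true; false; true; false; true; false; true].
Definition M10 : int*int*int*int := ((0), (1), (-1), (-1)).
Definition T10 : seq (int*int*nat) := [:: ((0), (0), 10%N); ((0), (0), 11%N); ((0), (0), 6%N); ((0), (0), 7%N); ((0), (0), 8%N); ((0), (0), 9%N); ((0), (0), 22%N); ((0), (0), 23%N); ((0), (0), 18%N); ((0), (0), 19%N); ((0), (0), 20%N); ((0), (0), 21%N); ((0), (-1), 34%N); ((0), (-1), 35%N); ((0), (-1), 30%N); ((0), (-1), 31%N); ((0), (-1), 32%N); ((0), (-1), 33%N); ((0), (0), 4%N); ((0), (0), 5%N); ((0), (0), 0%N); ((0), (0), 1%N); ((0), (0), 2%N); ((0), (0), 3%N); ((0), (-1), 16%N); ((0), (-1), 17%N); ((0), (-1), 12%N); ((0), (-1), 13%N); ((0), (-1), 14%N); ((0), (-1), 15%N); ((0), (-1), 28%N); ((0), (-1), 29%N); ((0), (-1), 24%N); ((0), (-1), 25%N); ((0), (-1), 26%N); ((0), (-1),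 27%N); ((0), (0), 106%N); ((0), (0), 107%N); ((0), (0), 100%N); ((0), (0), 101%N); ((0), (0), 102%N); ((0), (0), 103%N); ((0), (0), 104%N); ((0), (0), 105%N); ((0), (0), 74%N); ((0), (0), 75%N); ((0), (0), 68%N); ((0), (0), 69%N); ((0), (0), 70%N); ((0), (0), 71%N); ((0), (0), 72%N); ((0), (0), 73%N); ((0), (0), 90%N); ((0), (0), 91%N); ((0), (0), 84%N); ((0), (0), 85%N); ((0), (0), 86%N); ((0), (0), 87%N); ((0), (0), 88%N); ((0), (0), 89%N); ((0), (0), 42%N); ((0), (0), 43%N); ((0), (0), 36%N); ((0), (0), 37%N); ((0), (0), 38%N); ((0), (0), 39%N); ((0), (0), 40%N); ((0), (0), 41%N); ((0), (0), 96%N); ((0), (0), 97%N); ((0), (0), 98%N); ((0), (0), 99%N); ((0), (0), 92%N); ((0), (0), 93%N); ((0), (0), 94%N); ((0), (0), 95%N); ((0), (0), 58%N); ((0), (0), 59%N); ((0), (0), 52%N); ((0), (0), 53%N); ((0), (0), 54%N); ((0), (0), 55%N); ((0), (0), 56%N); ((0), (0), 57%N); ((0), (0), 80%N); ((0), (0), 81%N); ((0), (0), 82%N); ((0), (0), 83%N); ((0), (0), 76%N); ((0), (0), 77%N); ((0), (0), 78%N); ((0), (0), 79%N); ((0), (0), 50%N); ((0), (0), 51%N); ((0), (0), 44%N); ((0), (0), 45%N); ((0), (0), 46%N); ((0), (0), 47%N); ((0), (0), 48%N); ((0), (0), 49%N); ((0), (0), 64%N); ((0), (0), 65%N); ((0),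 (0), 66%N); ((0), (0), 67%N); ((0), (0), 60%N); ((0), (0), 61%N); ((0), (0), 62%N); ((0), (0), 63%N); ((0), (1), 116%N); ((0), (1), 117%N); ((0), (1), 118%N); ((0), (1), 119%N); ((0), (1), 108%N); ((0), (1), 109%N); ((0), (1), 110%N); ((0), (1), 111%N); ((0), (1), 112%N); ((0), (1), 113%N); ((0), (1), 114%N); ((0), (1), 115%N); ((0), (0), 128%N); ((0), (0), 129%N); ((0), (0), 130%N); ((0), (0), 131%N); ((0), (0), 120%N); ((0), (0), 121%N); ((0), (0), 122%N); ((0), (0), 123%N); ((0), (0), 124%N); ((0), (0), 125%N); ((0), (0), 126%N); ((0), (0), 127%N); ((0), (-1), 140%N); ((0), (-1), 141%N); ((0), (-1), 142%N); ((0), (-1), 143%N); ((0), (-1), 132%N); ((0), (-1), 133%N); ((0), (-1), 134%N); ((0), (-1), 135%N); ((0), (-1), 136%N); ((0), (-1), 137%N); ((0), (-1), 138%N); ((0), (-1), 139%N)].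
Definition M16 : int*int*int*int := ((1), (1), (-1), (0)).
Definition T16 : seq (int*int*nat) := [:: ((0), (0), 16%N); ((0), (0), 17%N); ((0), (0), 12%N); ((0), (0), 13%N); ((0), (0), 14%N); ((0), (0), 15%N); ((0), (0), 34%N); ((0), (0), 35%N); ((0), (0), 30%N); ((0), (0), 31%N); ((0), (0), 32%N); ((0), (0), 33%N); ((1), (0), 6%N); ((1), (0), 7%N); ((1), (0), 8%N); ((1), (0), 9%N); ((1), (0), 10%N); ((1), (0), 11%N); ((0), (0), 28%N); ((0), (0), 29%N); ((0), (0), 24%N); ((0), (0), 25%N); ((0), (0), 26%N); ((0), (0), 27%N); ((1), (0), 0%N); ((1), (0), 1%N); ((1), (0), 2%N); ((1), (0), 3%N); ((1), (0), 4%N); ((1), (0), 5%N); ((1), (0), 18%N); ((1), (0), 19%N); ((1), (0), 20%N); ((1), (0), 21%N); ((1), (0), 22%N); ((1), (0), 23%N); ((0), (1), 98%N); ((0), (1), 99%N); ((0), (1), 92%N); ((0), (1), 93%N); ((0), (1), 94%N); ((0), (1), 95%N); ((0), (1), 96%N); ((0), (1), 97%N); ((0), (1), 66%N); ((0), (1), 67%N); ((0), (1), 60%N); ((0), (1), 61%N); ((0), (1), 62%N); ((0), (1), 63%N); ((0), (1), 64%N); ((0), (1), 65%N); ((0), (1), 82%N); ((0), (1), 83%N); ((0), (1), 76%N); ((0), (1), 77%N); ((0), (1), 78%N); ((0), (1), 79%N); ((0), (1), 80%N); ((0), (1), 81%N); ((0), (0), 68%N); ((0), (0), 69%N); ((0),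 (0), 70%N); ((0), (0), 71%N); ((0), (0), 72%N); ((0), (0), 73%N); ((0), (0), 74%N); ((0), (0), 75%N); ((1), (0), 42%N); ((1), (0), 43%N); ((1), (0), 36%N); ((1), (0), 37%N); ((1), (0), 38%N); ((1), (0), 39%N); ((1), (0), 40%N); ((1), (0), 41%N); ((0), (0), 84%N); ((0), (0), 85%N); ((0), (0), 86%N); ((0), (0), 87%N); ((0), (0), 88%N); ((0), (0), 89%N); ((0), (0), 90%N); ((0), (0), 91%N); ((1), (0), 58%N); ((1), (0), 59%N); ((1), (0), 52%N); ((1), (0), 53%N); ((1), (0), 54%N); ((1), (0), 55%N); ((1), (0), 56%N); ((1), (0), 57%N); ((0), (0), 100%N); ((0), (0), 101%N); ((0), (0), 102%N); ((0), (0), 103%N); ((0), (0), 104%N); ((0), (0), 105%N); ((0), (0), 106%N); ((0), (0), 107%N); ((1), (0), 50%N); ((1), (0), 51%N); ((1), (0), 44%N); ((1), (0), 45%N); ((1), (0), 46%N); ((1), (0), 47%N); ((1), (0), 48%N); ((1), (0), 49%N); ((0), (1), 118%N); ((0), (1), 119%N); ((0), (1), 108%N); ((0), (1), 109%N); ((0), (1), 110%N); ((0), (1), 111%N); ((0), (1), 112%N); ((0), (1), 113%N); ((0), (1), 114%N); ((0), (1), 115%N); ((0), (1), 116%N); ((0), (1), 117%N); ((0), (0), 142%N); ((0), (0), 143%N); ((0), (0), 132%N); ((0), (0), 133%N); ((0), (0), 134%N); ((0), (0), 135%N); ((0), (0), 136%N); ((0), (0), 137%N); ((0), (0), 138%N);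 ((0), (0), 139%N); ((0), (0), 140%N); ((0), (0), 141%N); ((1), (0), 130%N); ((1), (0), 131%N); ((1), (0), 120%N); ((1), (0), 121%N); ((1), (0), 122%N); ((1), (0), 123%N); ((1), (0), 124%N); ((1), (0), 125%N); ((1), (0), 126%N); ((1), (0), 127%N); ((1), (0), 128%N); ((1), (0), 129%N)].
Definition M20 : int*int*int*int := ((-1), (-1), (1), (0)).
Definition T20 : seq (int*int*nat) := [:: ((0), (0), 20%N); ((0), (0), 21%N); ((0), (0), 22%N); ((0), (0), 23%N); ((0), (0), 18%N); ((0), (0), 19%N); ((0), (0), 2%N); ((0), (0), 3%N); ((0), (0), 4%N); ((0), (0), 5%N); ((0), (0), 0%N); ((0), (0), 1%N); ((-1), (0), 26%N); ((-1), (0), 27%N); ((-1), (0), 28%N); ((-1), (0), 29%N); ((-1), (0), 24%N); ((-1), (0), 25%N); ((0), (0), 8%N); ((0), (0), 9%N); ((0), (0), 10%N); ((0), (0), 11%N); ((0), (0), 6%N); ((0), (0), 7%N); ((-1), (0), 32%N); ((-1), (0), 33%N); ((-1), (0), 34%N); ((-1), (0), 35%N); ((-1), (0), 30%N); ((-1), (0), 31%N); ((-1), (0), 14%N); ((-1), (0), 15%N); ((-1), (0), 16%N); ((-1), (0), 17%N); ((-1), (0), 12%N); ((-1), (0), 13%N); ((0), (0), 62%N); ((0), (0), 63%N); ((0), (0), 64%N); ((0), (0), 65%N); ((0), (0), 66%N); ((0), (0), 67%N); ((0), (0), 60%N); ((0), (0), 61%N); ((0), (0), 94%N); ((0), (0),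 95%N); ((0), (0), 96%N); ((0), (0), 97%N); ((0), (0), 98%N); ((0), (0), 99%N); ((0), (0), 92%N); ((0), (0), 93%N); ((0), (0), 78%N); ((0), (0), 79%N); ((0), (0), 80%N); ((0), (0), 81%N); ((0), (0), 82%N); ((0), (0), 83%N); ((0), (0), 76%N); ((0), (0), 77%N); ((0), (0), 104%N); ((0), (0), 105%N); ((0), (0), 106%N); ((0), (0), 107%N); ((0), (0), 100%N); ((0), (0), 101%N); ((0), (0), 102%N); ((0), (0), 103%N); ((0), (0), 46%N); ((0), (0), 47%N); ((0), (0), 48%N); ((0), (0), 49%N); ((0), (0), 50%N); ((0), (0), 51%N); ((0), (0), 44%N); ((0), (0), 45%N); ((0), (0), 88%N); ((0), (0), 89%N); ((0), (0), 90%N); ((0), (0), 91%N); ((0), (0), 84%N); ((0), (0), 85%N); ((0), (0), 86%N); ((0), (0), 87%N); ((0), (0), 54%N); ((0), (0), 55%N); ((0), (0), 56%N); ((0), (0), 57%N); ((0), (0), 58%N); ((0), (0), 59%N); ((0), (0), 52%N); ((0), (0), 53%N); ((0), (0), 72%N); ((0), (0), 73%N); ((0), (0), 74%N); ((0), (0), 75%N); ((0), (0), 68%N); ((0), (0), 69%N); ((0), (0), 70%N); ((0), (0), 71%N); ((0), (0), 38%N); ((0), (0), 39%N); ((0), (0), 40%N); ((0), (0), 41%N); ((0), (0), 42%N); ((0), (0), 43%N); ((0), (0), 36%N); ((0), (0), 37%N); ((1), (0), 112%N); ((1), (0), 113%N); ((1), (0), 114%N); ((1), (0), 115%N); ((1),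 (0), 116%N); ((1), (0), 117%N); ((1), (0), 118%N); ((1), (0), 119%N); ((1), (0), 108%N); ((1), (0), 109%N); ((1), (0), 110%N); ((1), (0), 111%N); ((0), (0), 124%N); ((0), (0), 125%N); ((0), (0), 126%N); ((0), (0), 127%N); ((0), (0), 128%N); ((0), (0), 129%N); ((0), (0), 130%N); ((0), (0), 131%N); ((0), (0), 120%N); ((0), (0), 121%N); ((0), (0), 122%N); ((0), (0), 123%N); ((-1), (0), 136%N); ((-1), (0), 137%N); ((-1), (0), 138%N); ((-1), (0), 139%N); ((-1), (0), 140%N); ((-1), (0), 141%N); ((-1), (0), 142%N); ((-1), (0), 143%N); ((-1), (0), 132%N); ((-1), (0), 133%N); ((-1), (0), 134%N); ((-1), (0), 135%N)].
Definition M24 : int*int*int*int := ((0), (-1), (1), (1)).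
Definition T24 : seq (int*int*nat) := [:: ((0), (0), 24%N); ((0), (0), 25%N); ((0), (0), 26%N); ((0), (0), 27%N); ((0), (0), 28%N); ((0), (0), 29%N); ((0), (0), 12%N); ((0), (0), 13%N); ((0), (0), 14%N); ((0), (0), 15%N); ((0), (0), 16%N); ((0), (0), 17%N); ((0), (1), 2%N); ((0), (1), 3%N); ((0), (1), 4%N); ((0), (1), 5%N); ((0), (1), 0%N); ((0), (1), 1%N); ((0), (0), 30%N); ((0), (0), 31%N); ((0), (0), 32%N); ((0), (0), 33%N); ((0), (0), 34%N); ((0), (0), 35%N); ((0), (1), 20%N); ((0), (1), 21%N); ((0), (1), 22%N); ((0), (1), 23%N); ((0), (1), 18%N); ((0), (1), 19%N); ((0), (1), 8%N); ((0), (1), 9%N); ((0), (1), 10%N); ((0), (1), 11%N); ((0), (1), 6%N); ((0), (1), 7%N); ((0), (0), 70%N); ((0), (0), 71%N); ((0), (0), 72%N); ((0), (0), 73%N); ((0), (0), 74%N); ((0), (0), 75%N); ((0), (0), 68%N); ((0), (0), 69%N); ((0), (0), 102%N); ((0), (0), 103%N); ((0), (0), 104%N); ((0), (0), 105%N); ((0), (0), 106%N); ((0), (0), 107%N); ((0), (0), 100%N); ((0), (0), 101%N); ((0), (0), 86%N); ((0), (0), 87%N); ((0), (0), 88%N); ((0), (0), 89%N); ((0), (0), 90%N); ((0), (0), 91%N); ((0), (0), 84%N); ((0), (0), 85%N); ((1), (0), 46%N); ((1), (0), 47%N); ((1), (0), 48%N); ((1), (0), 49%N); ((1), (0), 50%N);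 ((1), (0), 51%N); ((1), (0), 44%N); ((1), (0), 45%N); ((0), (1), 60%N); ((0), (1), 61%N); ((0), (1), 62%N); ((0), (1), 63%N); ((0), (1), 64%N); ((0), (1), 65%N); ((0), (1), 66%N); ((0), (1), 67%N); ((1), (0), 54%N); ((1), (0), 55%N); ((1), (0), 56%N); ((1), (0), 57%N); ((1), (0), 58%N); ((1), (0), 59%N); ((1), (0), 52%N); ((1), (0), 53%N); ((0), (1), 76%N); ((0), (1), 77%N); ((0), (1), 78%N); ((0), (1), 79%N); ((0), (1), 80%N); ((0), (1), 81%N); ((0), (1), 82%N); ((0), (1), 83%N); ((1), (0), 38%N); ((1), (0), 39%N); ((1), (0), 40%N); ((1), (0), 41%N); ((1), (0), 42%N); ((1), (0), 43%N); ((1), (0), 36%N); ((1), (0), 37%N); ((0), (1), 92%N); ((0), (1), 93%N); ((0), (1), 94%N); ((0), (1), 95%N); ((0), (1), 96%N); ((0), (1), 97%N); ((0), (1), 98%N); ((0), (1), 99%N); ((1), (0), 110%N); ((1), (0), 111%N); ((1), (0), 112%N); ((1), (0), 113%N); ((1), (0), 114%N); ((1), (0), 115%N); ((1), (0), 116%N); ((1), (0), 117%N); ((1), (0), 118%N); ((1), (0), 119%N); ((1), (0), 108%N); ((1), (0), 109%N); ((0), (0), 134%N); ((0), (0), 135%N); ((0), (0), 136%N); ((0), (0), 137%N); ((0), (0), 138%N); ((0), (0), 139%N); ((0), (0), 140%N); ((0), (0), 141%N); ((0), (0), 142%N); ((0), (0), 143%N); ((0), (0), 132%N); ((0), (0),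 133%N); ((0), (1), 122%N); ((0), (1), 123%N); ((0), (1), 124%N); ((0), (1), 125%N); ((0), (1), 126%N); ((0), (1), 127%N); ((0), (1), 128%N); ((0), (1), 129%N); ((0), (1), 130%N); ((0), (1), 131%N); ((0), (1), 120%N); ((0), (1), 121%N)].
Definition M32 : int*int*int*int := ((-1), (0), (0), (-1)).
Definition T32 : seq (int*int*nat) := [:: ((0), (0), 32%N); ((0), (0), 33%N); ((0), (0), 34%N); ((0), (0), 35%N); ((0), (0), 30%N); ((0), (0), 31%N); ((0), (0), 26%N); ((0), (0), 27%N); ((0), (0), 28%N); ((0), (0), 29%N); ((0), (0), 24%N); ((0), (0), 25%N); ((0), (0), 22%N); ((0), (0), 23%N); ((0), (0), 18%N); ((0), (0), 19%N); ((0), (0), 20%N); ((0), (0), 21%N); ((0), (0), 14%N); ((0), (0), 15%N); ((0), (0), 16%N); ((0), (0), 17%N); ((0), (0), 12%N); ((0), (0), 13%N); ((0), (0), 10%N); ((0), (0), 11%N); ((0), (0), 6%N); ((0), (0), 7%N); ((0), (0), 8%N); ((0), (0), 9%N); ((0), (0), 4%N); ((0), (0), 5%N); ((0), (0), 0%N); ((0), (0), 1%N); ((0), (0), 2%N); ((0), (0), 3%N); ((1), (0), 48%N); ((1), (0), 49%N); ((1), (0), 50%N); ((1), (0), 51%N); ((1), (0), 44%N); ((1), (0), 45%N); ((1), (0), 46%N); ((1), (0), 47%N); ((1), (0), 40%N); ((1), (0), 41%N); ((1), (0), 42%N); ((1), (0), 43%N); ((1), (0), 36%N); ((1), (0), 37%N);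 ((1), (0), 38%N); ((1), (0), 39%N); ((1), (0), 56%N); ((1), (0), 57%N); ((1), (0), 58%N); ((1), (0), 59%N); ((1), (0), 52%N); ((1), (0), 53%N); ((1), (0), 54%N); ((1), (0), 55%N); ((0), (1), 96%N); ((0), (1), 97%N); ((0), (1), 98%N); ((0), (1), 99%N); ((0), (1), 92%N); ((0), (1), 93%N); ((0), (1), 94%N); ((0), (1), 95%N); ((0), (0), 104%N); ((0), (0), 105%N); ((0), (0), 106%N); ((0), (0), 107%N); ((0), (0), 100%N); ((0), (0), 101%N); ((0), (0), 102%N); ((0), (0), 103%N); ((0), (1), 80%N); ((0), (1), 81%N); ((0), (1), 82%N); ((0), (1), 83%N); ((0), (1), 76%N); ((0), (1), 77%N); ((0), (1), 78%N); ((0), (1), 79%N); ((0), (0), 88%N); ((0), (0), 89%N); ((0), (0), 90%N); ((0), (0), 91%N); ((0), (0), 84%N); ((0), (0), 85%N); ((0), (0), 86%N); ((0), (0), 87%N); ((0), (1), 64%N); ((0), (1), 65%N); ((0), (1), 66%N); ((0), (1), 67%N); ((0), (1), 60%N); ((0), (1), 61%N); ((0), (1), 62%N); ((0), (1), 63%N); ((0), (0), 72%N); ((0), (0), 73%N); ((0), (0), 74%N); ((0), (0), 75%N); ((0), (0), 68%N); ((0), (0), 69%N); ((0), (0), 70%N); ((0), (0), 71%N); ((1), (1), 114%N); ((1), (1), 115%N); ((1), (1), 116%N); ((1), (1), 117%N); ((1), (1), 118%N); ((1), (1), 119%N); ((1), (1), 108%N); ((1), (1), 109%N); ((1), (1),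 110%N); ((1), (1), 111%N); ((1), (1), 112%N); ((1), (1), 113%N); ((0), (0), 138%N); ((0), (0), 139%N); ((0), (0), 140%N); ((0), (0), 141%N); ((0), (0), 142%N); ((0), (0), 143%N); ((0), (0), 132%N); ((0), (0), 133%N); ((0), (0), 134%N); ((0), (0), 135%N); ((0), (0), 136%N); ((0), (0), 137%N); ((0), (0), 126%N); ((0), (0), 127%N); ((0), (0), 128%N); ((0), (0), 129%N); ((0), (0), 130%N); ((0), (0), 131%N); ((0), (0), 120%N); ((0), (0), 121%N); ((0), (0), 122%N); ((0), (0), 123%N); ((0), (0), 124%N); ((0), (0), 125%N)].

Lemma pathK_ok : all (fun k => act (nth [::] pathK k) x0 == (0, 0, ord144 k)) (iota 0 144).
Proof. by vm_compute. Qed.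

Lemma WA_ok : [&& act WA x0 == tr (1, 0) x0, act WAi x0 == tr (-1, 0) x0,
  act WB x0 == tr (0, 1) x0 & act WBi x0 == tr (0, -1) x0].
Proof. by vm_compute. Qed.

Definition reachK (a b : int) := exists w, act w x0 = tr (a, b) x0.

Lemma reach_step a b w d1 d2 : act w x0 = tr (d1, d2) x0 -> reachK a b -> reachK (a + d1) (b + d2).
Proof.
move=> Hw [w' Hw']; exists (w' ++ w); rewrite act_cat Hw' act_tr Hw tr_tr /=.
by rewrite (addrC a) (addrC b).
Qed.

Lemma reach_all a b : reachK a b.
Proof.
case/and4P: WA_ok => /eqP HA /eqP HAi /eqP HB /eqP HBi.
have Hb : forall b, reachK 0 b.
  have P : forall n : nat, reachK 0 n /\ reachK 0 (- n%:Z).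
    elim=> [|n [IH1 IH2]]; first by split; exists [::].
    have E : Posz n.+1 = Posz n + 1 by rewrite intS addrC.
    split.
      by have := reach_step HB IH1; rewrite addr0 E.
    have := reach_step HBi IH2; rewrite addr0.
    by rewrite E opprD.
  by case=> n; [case: (P n) | rewrite NegzE; case: (P n.+1)].
have P : forall n : nat, reachK n b /\ reachK (- n%:Z) b.
  elim=> [|n [IH1 IH2]]; first by split; apply: Hb.
  have E : Posz n.+1 = Posz n + 1 by rewrite intS addrC.
  split.
    by have := reach_step HA IH1; rewrite addr0 E.
  have := reach_step HAi IH2; rewrite addr0.
  by rewrite E opprD.
by case: a => n; [case: (P n) | rewrite NegzE; case: (P n.+1)].
Qed.

Lemma reach_flag x : exists w, x = act w x0.
Proof.
case: x => [[a b] k].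
have /allP /(_ k) := pathK_ok; rewrite mem_iota /= ltn_ord => /(_ isT) /eqP Hk.
case: (reach_all a b) => w Hw.
exists (w ++ nth [::] pathK k); rewrite act_cat Hw act_tr Hk ord144_val /=.
by rewrite !add0r.
Qed.

Lemma aut_unique f g : commK f -> commK g -> f x0 = g x0 -> forall x, f x = g x.
Proof. by move=> Hf Hg H0 x; case: (reach_flag x) => w ->; rewrite !comm_act // H0. Qed.

Lemma commK_comp f g : commK f -> commK g -> commK (fun x => f (g x)).
Proof.
move=> Hf Hg x; case: (Hg x) => [-> [-> ->]].
by case: (Hf (g x)) => [-> [-> ->]].
Qed.

Lemma flag_tr x : x = tr (x.1.1, x.1.2) (0, 0, x.2).
Proof. by case: x => [[a b] k] /=; rewrite !add0r. Qed.

Definition Rf (M : int*int*int*int) (tab : seq (int*int*nat)) (x : flagK) : flagK :=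
  let: (a, b, k) := x in
  let: (oa, ob, k') := nth (0, 0, 0%N) tab k in
  (M.1.1.1 * a + M.1.1.2 * b + oa, M.1.2 * a + M.2 * b + ob, ord144 k').
Definition Mv (M : int*int*int*int) (u : int*int) : int*int :=
  (M.1.1.1 * u.1 + M.1.1.2 * u.2, M.1.2 * u.1 + M.2 * u.2).

Lemma Rf_tr M tab u x : Rf M tab (tr u x) = tr (Mv M u) (Rf M tab x).
Proof.
case: x => [[a b] k]; case: u => p q; case: M => [[[m11 m12] m21] m22] /=.
by case: (nth _ tab k) => [[oa ob] k'] /=; congr (_, _, _); ring.
Qed.

Definition Rcheck M tab : bool :=
  all (fun k => all (fun i => Rf M tab (stp i (0, 0, ord144 k)) ==
                              stp i (Rf M tab (0, 0, ord144 k))) [:: 0; 1; 2]%N)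
      (iota 0 144).

Lemma Rf_comm M tab : Rcheck M tab -> commK (Rf M tab).
Proof.
move=> H.
have Hg : forall i x, (i < 3)%N -> Rf M tab (stp i x) = stp i (Rf M tab x).
  move=> i x Hi; rewrite (flag_tr x); set u := (_, _).
  rewrite stp_tr !Rf_tr stp_tr; congr tr.
  move: H; rewrite /Rcheck => /allP Hall.
  have Hx : (val x.2 \in iota 0 144) by rewrite mem_iota ltn_ord.
  have /allP Hi2 := Hall _ Hx.
  have := Hi2 i; rewrite !inE ord144_val; case: i Hi {Hi2} => [|[|[|]]] // _ /(_ isT) /eqP //.
by move=> x; split; [exact: (Hg 0%N) | split; [exact: (Hg 1%N) | exact: (Hg 2%N)]].
Qed.

Lemma face_act w x : all (fun i => i < 2)%N w -> same_faceK x (act w x).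
Proof.
elim: w x => [|i w IH] x /=; first by move=> _; apply: rt_refl.
case/andP=> Hi Hw; eapply rt_trans; last exact: (IH (stp i x) Hw).
apply: rt_step; rewrite /step2.
by case: i Hi => [|[|]] //= _; [left | right].
Qed.

Lemma face_tr u x y : same_faceK x y -> same_faceK (tr u x) (tr u y).
Proof.
elim=> [x' y' [->|->]| x' | x' y' z' _ H1 _ H2].
- by apply: rt_step; left; case: (commK_tr u x') => ->.
- by apply: rt_step; right; case: (commK_tr u x') => _ [-> _].
- exact: rt_refl.
- exact: rt_trans H1 H2.
Qed.

Lemma rot_fix M tab c d u v y w : all (fun i => i < 2)%N w ->
  act w y = tr v (Rf M tab y) ->
  (Mv M u).1 + c = v.1 + u.1 -> (Mv M u).2 + d = v.2 + u.2 ->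
  exists x, same_faceK x (tr (c, d) (Rf M tab x)).
Proof.
move=> Hw Hy E1 E2; exists (tr u y).
rewrite Rf_tr tr_tr E1 E2 -tr_tr -Hy; apply: face_tr; exact: face_act.
Qed.
Lemma wit10 : [&& act [:: 1%N; 0%N; 1%N; 0%N] ((0), (0), ord144 120) == tr ((0), (0)) (Rf M10 T10 ((0), (0), ord144 120)), act [:: 1%N; 0%N; 1%N; 0%N] ((1), (0), ord144 108) == tr ((1), (0)) (Rf M10 T10 ((1), (0), ord144 108)) & act [:: 1%N; 0%N; 1%N; 0%N] ((1), (-1), ord144 132) == tr ((2), (0)) (Rf M10 T10 ((1), (-1), ord144 132))].
Proof. by vm_compute. Qed.
Lemma R10_ok : Rcheck M10 T10 && (Rf M10 T10 x0 == (0, 0, ord144 10)).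
Proof. by vm_compute. Qed.
Lemma wit16 : act [:: 1%N; 0%N] ((1), (0), ord144 108) == tr ((0), (0)) (Rf M16 T16 ((1), (0), ord144 108)).
Proof. by vm_compute. Qed.
Lemma R16_ok : Rcheck M16 T16 && (Rf M16 T16 x0 == (0, 0, ord144 16)).
Proof. by vm_compute. Qed.
Lemma wit20 : [&& act [:: 0%N; 1%N; 0%N; 1%N] ((0), (0), ord144 120) == tr ((0), (0)) (Rf M20 T20 ((0), (0), ord144 120)), act [:: 0%N; 1%N; 0%N; 1%N] ((0), (0), ord144 132) == tr ((1), (0)) (Rf M20 T20 ((0), (0), ord144 132)) & act [:: 0%N; 1%N; 0%N; 1%N] ((1), (1), ord144 108) == tr ((2), (0)) (Rf M20 T20 ((1), (1), ord144 108))].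
Proof. by vm_compute. Qed.
Lemma R20_ok : Rcheck M20 T20 && (Rf M20 T20 x0 == (0, 0, ord144 20)).
Proof. by vm_compute. Qed.
Lemma wit24 : act [:: 0%N; 1%N] ((0), (1), ord144 108) == tr ((0), (0)) (Rf M24 T24 ((0), (1), ord144 108)).
Proof. by vm_compute. Qed.
Lemma R24_ok : Rcheck M24 T24 && (Rf M24 T24 x0 == (0, 0, ord144 24)).
Proof. by vm_compute. Qed.
Lemma wit32 : [&& act [:: 0%N; 1%N; 0%N; 1%N] ((0), (0), ord144 84) == tr ((0), (0)) (Rf M32 T32 ((0), (0), ord144 84)), act [:: 0%N; 1%N; 0%N; 1%N] ((1), (0), ord144 52) == tr ((1), (0)) (Rf M32 T32 ((1), (0), ord144 52)), act [:: 0%N; 1%N; 0%N; 1%N] ((0), (1), ord144 76) == tr ((0), (1)) (Rf M32 T32 ((0), (1), ord144 76)) & act [:: 0%N; 1%N; 0%N; 1%N; 0%N; 1%N] ((1), (1), ord144 108) == tr ((1), (1)) (Rf M32 T32 ((1), (1), ord144 108))].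
Proof. by vm_compute. Qed.
Lemma R32_ok : Rcheck M32 T32 && (Rf M32 T32 x0 == (0, 0, ord144 32)).
Proof. by vm_compute. Qed.

Lemma mod3 (z : int) : exists q r, z = q * 3 + r /\ (r = 0 \/ r = 1 \/ r = 2).
Proof.
exists (z %/ 3)%Z, (z %% 3)%Z; split; first exact: divz_eq.
have h1 : (0 <= z %% 3)%Z by apply: modz_ge0.
have h2 : (z %% 3 < 3)%Z by apply: ltz_pmod.
lia.
Qed.

Lemma mod2 (z : int) : exists q r, z = q * 2 + r /\ (r = 0 \/ r = 1).
Proof.
exists (z %/ 2)%Z, (z %% 2)%Z; split; first exact: divz_eq.
have h1 : (0 <= z %% 2)%Z by apply: modz_ge0.
have h2 : (z %% 2 < 2)%Z by apply: ltz_pmod.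
lia.
Qed.

Lemma rot10 c d : exists x, same_faceK x (tr (c, d) (Rf M10 T10 x)).
Proof.
case/and3P: wit10 => /eqP W0 /eqP W1 /eqP W2.
case: (mod3 (c - d)) => q [r [E [Hr|[Hr|Hr]]]].
- by apply: (rot_fix (u := (d + 2 * q, - q)) _ W0) => //=; rewrite /M10 /=; lia.
- by apply: (rot_fix (u := (d + 2 * q, - q)) _ W1) => //=; rewrite /M10 /=; lia.
- by apply: (rot_fix (u := (d + 2 * q, - q)) _ W2) => //=; rewrite /M10 /=; lia.
Qed.

Lemma rot20 c d : exists x, same_faceK x (tr (c, d) (Rf M20 T20 x)).
Proof.
case/and3P: wit20 => /eqP W0 /eqP W1 /eqP W2.
case: (mod3 (c - d)) => q [r [E [Hr|[Hr|Hr]]]].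
- by apply: (rot_fix (u := (q, q + d)) _ W0) => //=; rewrite /M20 /=; lia.
- by apply: (rot_fix (u := (q, q + d)) _ W1) => //=; rewrite /M20 /=; lia.
- by apply: (rot_fix (u := (q, q + d)) _ W2) => //=; rewrite /M20 /=; lia.
Qed.

Lemma rot16 c d : exists x, same_faceK x (tr (c, d) (Rf M16 T16 x)).
Proof.
move/eqP: wit16 => W0.
by apply: (rot_fix (u := (d + c, - c)) _ W0) => //=; rewrite /M16 /=; lia.
Qed.

Lemma rot24 c d : exists x, same_faceK x (tr (c, d) (Rf M24 T24 x)).
Proof.
move/eqP: wit24 => W0.
by apply: (rot_fix (u := (- d, c + d)) _ W0) => //=; rewrite /M24 /=; lia.
Qed.

Lemma rot32 c d : exists x, same_faceK x (tr (c, d) (Rf M32 T32 x)).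
Proof.
case/and4P: wit32 => /eqP W0 /eqP W1 /eqP W2 /eqP W3.
case: (mod2 c) => q [r [E [Hr|Hr]]]; case: (mod2 d) => q' [r' [E' [Hr'|Hr']]].
- by apply: (rot_fix (u := (q, q')) _ W0) => //=; rewrite /M32 /=; lia.
- by apply: (rot_fix (u := (q, q')) _ W2) => //=; rewrite /M32 /=; lia.
- by apply: (rot_fix (u := (q, q')) _ W1) => //=; rewrite /M32 /=; lia.
- by apply: (rot_fix (u := (q, q')) _ W3) => //=; rewrite /M32 /=; lia.
Qed.

Definition colK (x : flagK) : bool := nth false pkK x.2.

Lemma colK_ok : all (fun k => all (fun i => colK (stp i (0, 0, ord144 k)) ==
   ~~ colK (0, 0, ord144 k)) [:: 0; 1; 2]%N) (iota 0 144).
Proof. by vm_compute. Qed.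

Lemma colK_tr u x : colK (tr u x) = colK x.
Proof. by case: x => [[a b] k]. Qed.

Lemma colK_stp i x : colK (stp i x) = ~~ colK x.
Proof.
have H : forall i, (i < 3)%N -> colK (stp i x) = ~~ colK x.
  move=> j Hj; rewrite (flag_tr x) stp_tr !colK_tr.
  have Hx : (val x.2 \in iota 0 144) by rewrite mem_iota ltn_ord.
  have /allP Hi2 := allP colK_ok _ Hx.
  have := Hi2 j; rewrite !inE ord144_val.
  by case: j Hj {Hi2} => [|[|[|]]] // _ /(_ isT) /eqP.
case: i => [|[|[|i]]]; try exact: H.
exact: (H 2%N).
Qed.

Definition badloop (k : nat) : bool :=
  let w := nth [::] loopsK k in
  (act w x0 == x0) && (act w (0, 0, ord144 k) != (0, 0, ord144 k)).

Lemma classK_ok : all (fun k => [|| k == 0%N, k \in [:: 10; 16; 20; 24; 32]%N,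
   badloop k | nth false pkK k != nth false pkK 0]) (iota 0 144).
Proof. by vm_compute. Qed.

Lemma rot_case (Gamma : (flagK -> flagK) -> Prop) M tab g c d (m : 'I_144) :
  acts_without_fixed_cells Gamma -> Gamma g -> commK g ->
  Rcheck M tab -> Rf M tab x0 = (0, 0, m) -> g x0 = tr (c, d) (0, 0, m) ->
  (exists x, same_faceK x (tr (c, d) (Rf M tab x))) -> val m != 0%N -> False.
Proof.
move=> Hfree Gg cg HR HR0 Hg0 [x Hx] Hm.
have E : forall y, g y = tr (c, d) (Rf M tab y).
  apply: aut_unique => //; first exact: commK_comp (commK_tr _) (Rf_comm HR).
  by rewrite HR0.
have Hne : exists y, g y <> y.
  by exists x0; rewrite Hg0 /= => [[_ _ Em]]; move: Hm; rewrite Em.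
by case: (Hfree g Gg Hne x) => _ [_]; apply; rewrite E.
Qed.

Lemma gamma_tr (Gamma : (flagK -> flagK) -> Prop) (col : flagK -> bool) :
  (forall g, Gamma g -> commK g) ->
  (forall i x, col (stp i x) = ~~ col x) ->
  (forall g, Gamma g -> col (g x0) = col x0) ->
  acts_without_fixed_cells Gamma ->
  forall g, Gamma g -> exists v, forall x, g x = tr v x.
Proof.
move=> Hc Hcol Hg0 Hfree g Gg; have cg := Hc g Gg.
case Eg: (g x0) => [[c d] m].
have Hgx0 : g x0 = tr (c, d) (0, 0, m) by rewrite Eg /= !add0r.
have Hm : val m \in iota 0 144 by rewrite mem_iota ltn_ord.
have Hmo : forall n, val m = n -> m = ord144 n.
  by move=> n Hn; apply: val_inj => /=; rewrite -Hn modn_small ?ltn_ord.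
case/or4P: (allP classK_ok _ Hm) => [/eqP m0 | Hrot | Hbad | Hp].
- exists (c, d); apply: (aut_unique cg (commK_tr _)).
  by rewrite Hgx0 (Hmo _ m0).
- exfalso; move: Hrot; rewrite !inE => /orP [/eqP E|/orP [/eqP E|/orP [/eqP E|/orP [/eqP E|/eqP E]]]];
    have Hm0 : val m != 0%N by rewrite E.
  + case/andP: R10_ok => HR /eqP HR0; rewrite -(Hmo _ E) in HR0.
    exact: (rot_case Hfree Gg cg HR HR0 Hgx0 (rot10 c d) Hm0).
  + case/andP: R16_ok => HR /eqP HR0; rewrite -(Hmo _ E) in HR0.
    exact: (rot_case Hfree Gg cg HR HR0 Hgx0 (rot16 c d) Hm0).
  + case/andP: R20_ok => HR /eqP HR0; rewrite -(Hmo _ E) in HR0.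
    exact: (rot_case Hfree Gg cg HR HR0 Hgx0 (rot20 c d) Hm0).
  + case/andP: R24_ok => HR /eqP HR0; rewrite -(Hmo _ E) in HR0.
    exact: (rot_case Hfree Gg cg HR HR0 Hgx0 (rot24 c d) Hm0).
  + case/andP: R32_ok => HR /eqP HR0; rewrite -(Hmo _ E) in HR0.
    exact: (rot_case Hfree Gg cg HR HR0 Hgx0 (rot32 c d) Hm0).
- exfalso; move: Hbad; rewrite /badloop ord144_val => /andP [/eqP Hw /eqP []].
  apply: (@tr_inj (c, d)); rewrite -act_tr -Hgx0 -comm_act //.
  by rewrite Hw.
- exfalso; move/negP: Hp; apply.
  have inv : forall w y, col (act w y) (+) colK (act w y) = col y (+) colK y.
    elim=> [|i w IH] y //=; rewrite IH Hcol colK_stp.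
    by case: (col y); case: (colK y).
  case: (reach_flag (g x0)) => w Hw.
  have := inv w x0; rewrite -Hw Hg0 // => /addbI.
  by rewrite Eg /colK /= => ->.
Qed.

Lemma autX_step (F : finType) (s0 s1 s2 : F -> F) (p : {perm F}) :
  is_autX s0 s1 s2 p <->
  forall x, [/\ p (s0 x) = s0 (p x), p (s1 x) = s1 (p x) & p (s2 x) = s2 (p x)].
Proof.
split.
  by move/forallP=> H x; case/and3P: (H x) => /eqP -> /eqP -> /eqP ->.
by move=> H; apply/forallP=> x; case: (H x) => -> -> ->; rewrite !eqxx.
Qed.

Lemma autX_mul (F : finType) (s0 s1 s2 : F -> F) (p q : {perm F}) :
  is_autX s0 s1 s2 p -> is_autX s0 s1 s2 q -> is_autX s0 s1 s2 (p * q)%g.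
Proof.
move=> /autX_step Hp /autX_step Hq; apply/autX_step => x; rewrite !permM.
by case: (Hp x) => -> -> ->; case: (Hq (p x)) => -> -> ->.
Qed.

Lemma autX_inv (F : finType) (s0 s1 s2 : F -> F) (p : {perm F}) :
  is_autX s0 s1 s2 p -> is_autX s0 s1 s2 p^-1%g.
Proof.
move=> /autX_step Hp; apply/autX_step => x.
set z := (p^-1)%g x; have Ez : x = p z by rewrite /z permKV.
by rewrite Ez; case: (Hp z) => <- <- <-; rewrite !permK.
Qed.

Lemma autX_one (F : finType) (s0 s1 s2 : F -> F) : is_autX s0 s1 s2 1%g.
Proof. by apply/autX_step => x; rewrite !perm1. Qed.

Lemma conn_aut (F : finType) (s0 s1 s2 : F -> F) (p : {perm F}) :
  is_autX s0 s1 s2 p -> forall a b, connect (orb_rel s1 s2) a b ->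
  connect (orb_rel s1 s2) (p a) (p b).
Proof.
move=> /autX_step Hp a b /connectP [pth Hpth ->] {b}.
elim: pth a Hpth => [|c pth IH] a /=; first by rewrite connect0.
case/andP=> Hac Hpth; apply: connect_trans (IH c Hpth); apply: connect1.
case: (Hp a) => _ E1 E2; rewrite /orb_rel /= -E1 -E2.
by case/orP: Hac => /eqP ->; rewrite eqxx ?orbT.
Qed.

Lemma conn_sym (F : finType) (s1 s2 : F -> F) :
  (forall x, s1 (s1 x) = x /\ s2 (s2 x) = x) -> connect_sym (orb_rel s1 s2).
Proof.
move=> Hi; apply: sym_connect_sym => x y; rewrite /orb_rel /=.
case: (Hi x) => h1 h2; case: (Hi y) => h1' h2'.
congr orb; apply/eqP/eqP => ->; by [].
Qed.

Lemma orbit_sub (F : finType) (s0 s1 s2 : F -> F) (p : {perm F}) y y' :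
  is_autX s0 s1 s2 p -> y' \in vertex_of s1 s2 (p y) ->
  vertex_aut_orbit s0 s1 s2 y' \subset vertex_aut_orbit s0 s1 s2 y.
Proof.
move=> Hp Hy; apply/subsetP => z; rewrite !inE => /existsP [q /andP [Hq Hz]].
apply/existsP; exists (p * q)%g; rewrite autX_mul //= permM.
move: Hy Hz; rewrite !inE => Hy Hz.
exact: connect_trans (conn_aut Hq Hy) Hz.
Qed.

Lemma orbit_eq (F : finType) (s0 s1 s2 : F -> F) (p : {perm F}) y y' :
  (forall x, s1 (s1 x) = x /\ s2 (s2 x) = x) ->
  is_autX s0 s1 s2 p -> y' \in vertex_of s1 s2 (p y) ->
  vertex_aut_orbit s0 s1 s2 y' = vertex_aut_orbit s0 s1 s2 y.
Proof.
move=> Hi Hp Hy; apply/eqP; rewrite eqEsubset (orbit_sub Hp Hy) /=.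
apply: (orbit_sub (autX_inv Hp)); move: Hy; rewrite !inE => Hy.
have := conn_aut (autX_inv Hp) Hy; rewrite permK.
by rewrite (conn_sym Hi).
Qed.
Definition T9 : seq nat := [:: 0%N; 2%N; 4%N; 6%N; 8%N; 10%N; 12%N; 14%N; 16%N].
Definition coverK : seq (nat * bool * (int * int) * seq nat) := [::
  (0%N, false, ((0), (0)), [:: ]);
  (0%N, false, ((0), (0)), [:: 1%N]);
  (1%N, false, ((0), (0)), [:: ]);
  (1%N, false, ((0), (0)), [:: 1%N]);
  (2%N, false, ((0), (0)), [:: ]);
  (2%N, false, ((0), (0)), [:: 1%N]);
  (3%N, false, ((0), (0)), [:: ]);
  (3%N, false, ((0), (0)), [:: 1%N]);
  (4%N, false, ((0), (0)), [:: ]);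
  (4%N, false, ((0), (0)), [:: 1%N]);
  (5%N, false, ((0), (0)), [:: ]);
  (5%N, false, ((0), (0)), [:: 1%N]);
  (6%N, false, ((0), (0)), [:: ]);
  (6%N, false, ((0), (0)), [:: 1%N]);
  (7%N, false, ((0), (0)), [:: ]);
  (7%N, false, ((0), (0)), [:: 1%N]);
  (8%N, false, ((0), (0)), [:: ]);
  (8%N, false, ((0), (0)), [:: 1%N]);
  (7%N, true, ((0), (0)), [:: ]);
  (7%N, true, ((0), (0)), [:: 1%N]);
  (8%N, true, ((0), (0)), [:: ]);
  (8%N, true, ((0), (0)), [:: 1%N]);
  (6%N, true, ((0), (0)), [:: ]);
  (6%N, true, ((0), (0)), [:: 1%N]);
  (5%N, true, ((0), (0)), [:: ]);
  (5%N, true, ((0), (0)), [:: 1%N]);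
  (3%N, true, ((0), (0)), [:: ]);
  (3%N, true, ((0), (0)), [:: 1%N]);
  (4%N, true, ((0), (0)), [:: ]);
  (4%N, true, ((0), (0)), [:: 1%N]);
  (2%N, true, ((0), (0)), [:: ]);
  (2%N, true, ((0), (0)), [:: 1%N]);
  (0%N, true, ((0), (0)), [:: ]);
  (0%N, true, ((0), (0)), [:: 1%N]);
  (1%N, true, ((0), (0)), [:: ]);
  (1%N, true, ((0), (0)), [:: 1%N]);
  (4%N, false, ((0), (0)), [:: 2%N; 1%N]);
  (4%N, false, ((0), (0)), [:: 2%N]);
  (2%N, true, ((-1), (0)), [:: 1%N; 2%N]);
  (2%N, true, ((-1), (0)), [:: 1%N; 2%N; 1%N]);
  (1%N, true, ((-1), (0)), [:: 2%N; 1%N]);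
  (1%N, true, ((-1), (0)), [:: 2%N]);
  (5%N, false, ((0), (0)), [:: 1%N; 2%N]);
  (5%N, false, ((0), (0)), [:: 1%N; 2%N; 1%N]);
  (1%N, false, ((0), (0)), [:: 2%N; 1%N]);
  (1%N, false, ((0), (0)), [:: 2%N]);
  (5%N, true, ((-1), (0)), [:: 1%N; 2%N]);
  (5%N, true, ((-1), (0)), [:: 1%N; 2%N; 1%N]);
  (4%N, true, ((-1), (0)), [:: 2%N; 1%N]);
  (4%N, true, ((-1), (0)), [:: 2%N]);
  (2%N, false, ((0), (0)), [:: 1%N; 2%N]);
  (2%N, false, ((0), (0)), [:: 1%N; 2%N; 1%N]);
  (5%N, false, ((0), (0)), [:: 2%N; 1%N; 2%N; 1%N]);
  (5%N, false, ((0), (0)), [:: 2%N; 1%N; 2%N]);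
  (1%N, true, ((-1), (0)), [:: 2%N; 1%N; 2%N; 1%N]);
  (1%N, true, ((-1), (0)), [:: 2%N; 1%N; 2%N]);
  (5%N, true, ((-1), (0)), [:: 2%N; 1%N; 2%N; 1%N]);
  (5%N, true, ((-1), (0)), [:: 2%N; 1%N; 2%N]);
  (1%N, false, ((0), (0)), [:: 2%N; 1%N; 2%N; 1%N]);
  (1%N, false, ((0), (0)), [:: 2%N; 1%N; 2%N]);
  (0%N, false, ((0), (0)), [:: 1%N; 2%N]);
  (0%N, false, ((0), (0)), [:: 1%N; 2%N; 1%N]);
  (2%N, false, ((0), (0)), [:: 2%N; 1%N]);
  (2%N, false, ((0), (0)), [:: 2%N]);
  (7%N, false, ((0), (-1)), [:: 1%N; 2%N]);
  (7%N, false, ((0), (-1)), [:: 1%N; 2%N; 1%N]);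
  (6%N, false, ((0), (-1)), [:: 2%N; 1%N]);
  (6%N, false, ((0), (-1)), [:: 2%N]);
  (8%N, false, ((0), (0)), [:: 1%N; 2%N]);
  (8%N, false, ((0), (0)), [:: 1%N; 2%N; 1%N]);
  (7%N, false, ((0), (0)), [:: 2%N; 1%N]);
  (7%N, false, ((0), (0)), [:: 2%N]);
  (4%N, false, ((0), (0)), [:: 1%N; 2%N]);
  (4%N, false, ((0), (0)), [:: 1%N; 2%N; 1%N]);
  (3%N, false, ((0), (0)), [:: 2%N; 1%N]);
  (3%N, false, ((0), (0)), [:: 2%N]);
  (6%N, true, ((0), (0)), [:: 2%N; 1%N; 2%N; 1%N]);
  (6%N, true, ((0), (0)), [:: 2%N; 1%N; 2%N]);
  (0%N, false, ((0), (0)), [:: 2%N; 1%N; 2%N; 1%N]);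
  (0%N, false, ((0), (0)), [:: 2%N; 1%N; 2%N]);
  (6%N, false, ((0), (-1)), [:: 2%N; 1%N; 2%N; 1%N]);
  (6%N, false, ((0), (-1)), [:: 2%N; 1%N; 2%N]);
  (0%N, true, ((0), (-1)), [:: 2%N; 1%N; 2%N; 1%N]);
  (0%N, true, ((0), (-1)), [:: 2%N; 1%N; 2%N]);
  (3%N, true, ((0), (0)), [:: 2%N; 1%N; 2%N; 1%N]);
  (3%N, true, ((0), (0)), [:: 2%N; 1%N; 2%N]);
  (8%N, false, ((0), (0)), [:: 2%N; 1%N; 2%N; 1%N]);
  (8%N, false, ((0), (0)), [:: 2%N; 1%N; 2%N]);
  (3%N, false, ((0), (0)), [:: 2%N; 1%N; 2%N; 1%N]);
  (3%N, false, ((0), (0)), [:: 2%N; 1%N; 2%N]);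
  (8%N, true, ((0), (0)), [:: 2%N; 1%N; 2%N; 1%N]);
  (8%N, true, ((0), (0)), [:: 2%N; 1%N; 2%N]);
  (7%N, true, ((0), (0)), [:: 1%N; 2%N]);
  (7%N, true, ((0), (0)), [:: 1%N; 2%N; 1%N]);
  (6%N, true, ((0), (0)), [:: 2%N; 1%N]);
  (6%N, true, ((0), (0)), [:: 2%N]);
  (0%N, true, ((0), (-1)), [:: 1%N; 2%N]);
  (0%N, true, ((0), (-1)), [:: 1%N; 2%N; 1%N]);
  (2%N, true, ((0), (-1)), [:: 2%N; 1%N]);
  (2%N, true, ((0), (-1)), [:: 2%N]);
  (4%N, true, ((0), (0)), [:: 1%N; 2%N]);
  (4%N, true, ((0), (0)), [:: 1%N; 2%N; 1%N]);
  (3%N, true, ((0), (0)), [:: 2%N; 1%N]);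
  (3%N, true, ((0), (0)), [:: 2%N]);
  (8%N, true, ((0), (0)), [:: 1%N; 2%N]);
  (8%N, true, ((0), (0)), [:: 1%N; 2%N; 1%N]);
  (7%N, true, ((0), (0)), [:: 2%N; 1%N]);
  (7%N, true, ((0), (0)), [:: 2%N]);
  (7%N, false, ((0), (-1)), [:: 2%N; 1%N; 2%N; 1%N]);
  (7%N, false, ((0), (-1)), [:: 2%N; 1%N; 2%N]);
  (2%N, false, ((0), (0)), [:: 2%N; 1%N; 2%N; 1%N]);
  (2%N, false, ((0), (0)), [:: 2%N; 1%N; 2%N]);
  (4%N, true, ((-1), (0)), [:: 2%N; 1%N; 2%N; 1%N]);
  (4%N, true, ((-1), (0)), [:: 2%N; 1%N; 2%N]);
  (7%N, true, ((-1), (0)), [:: 2%N; 1%N; 2%N; 1%N]);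
  (7%N, true, ((-1), (0)), [:: 2%N; 1%N; 2%N]);
  (2%N, true, ((-1), (-1)), [:: 2%N; 1%N; 2%N; 1%N]);
  (2%N, true, ((-1), (-1)), [:: 2%N; 1%N; 2%N]);
  (4%N, false, ((0), (-1)), [:: 2%N; 1%N; 2%N; 1%N]);
  (4%N, false, ((0), (-1)), [:: 2%N; 1%N; 2%N]);
  (8%N, true, ((0), (0)), [:: 2%N; 1%N]);
  (8%N, true, ((0), (0)), [:: 2%N]);
  (3%N, false, ((0), (0)), [:: 1%N; 2%N]);
  (3%N, false, ((0), (0)), [:: 1%N; 2%N; 1%N]);
  (5%N, false, ((0), (0)), [:: 2%N; 1%N]);
  (5%N, false, ((0), (0)), [:: 2%N]);
  (1%N, false, ((0), (0)), [:: 1%N; 2%N]);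
  (1%N, false, ((0), (0)), [:: 1%N; 2%N; 1%N]);
  (0%N, false, ((0), (0)), [:: 2%N; 1%N]);
  (0%N, false, ((0), (0)), [:: 2%N]);
  (6%N, true, ((0), (0)), [:: 1%N; 2%N]);
  (6%N, true, ((0), (0)), [:: 1%N; 2%N; 1%N]);
  (1%N, true, ((0), (0)), [:: 1%N; 2%N]);
  (1%N, true, ((0), (0)), [:: 1%N; 2%N; 1%N]);
  (0%N, true, ((0), (0)), [:: 2%N; 1%N]);
  (0%N, true, ((0), (0)), [:: 2%N]);
  (6%N, false, ((0), (0)), [:: 1%N; 2%N]);
  (6%N, false, ((0), (0)), [:: 1%N; 2%N; 1%N]);
  (8%N, false, ((0), (0)), [:: 2%N; 1%N]);
  (8%N, false, ((0), (0)), [:: 2%N]);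
  (3%N, true, ((0), (0)), [:: 1%N; 2%N]);
  (3%N, true, ((0), (0)), [:: 1%N; 2%N; 1%N]);
  (5%N, true, ((0), (0)), [:: 2%N; 1%N]);
  (5%N, true, ((0), (0)), [:: 2%N])].

Definition HK := Rf M32 T32.
Definition tflag (i : nat) : flagK := (0, 0, ord144 (nth 0%N T9 i)).

Definition cov_ok (k : nat) : bool :=
  let: (i, e, pq, w) := nth (0%N, false, (0, 0), [::]) coverK k in
  [&& (i < 9)%N, all (fun j => (j == 1%N) || (j == 2%N)) w &
     act w (tr pq (if e then HK (tflag i) else tflag i)) == (0, 0, ord144 k)].

Lemma cover_ok : all cov_ok (iota 0 144).
Proof. by vm_compute. Qed.

Lemma HK_comm : commK HK.
Proof. by case/andP: R32_ok => H _; apply: Rf_comm. Qed.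

Lemma HH x : HK (HK x) = x.
Proof.
have H0 : HK (HK x0) == x0 by vm_compute.
apply: (aut_unique (commK_comp HK_comm HK_comm) (f := fun y => HK (HK y)) (g := id)) => //.
Qed.

Lemma eta_act (F : finType) (s0 s1 s2 : F -> F) (eta : flagK -> F) :
  (forall x, eta (r0K x) = s0 (eta x) /\ eta (r1K x) = s1 (eta x) /\
             eta (r2K x) = s2 (eta x)) ->
  forall w z, all (fun j => (j == 1%N) || (j == 2%N)) w ->
  eta (act w z) \in vertex_of s1 s2 (eta z).
Proof.
move=> He; elim=> [|i w IH] z /=; first by rewrite inE connect0.
case/andP=> Hi Hw; have := IH (stp i z) Hw; rewrite !inE => H.
apply: connect_trans H; apply: connect1; rewrite /orb_rel /=.
case: (He z) => _ [E1 E2].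
by case/orP: Hi => /eqP -> /=; rewrite ?E1 ?E2 eqxx ?orbT.
Qed.

Lemma descend (F : finType) (s0 s1 s2 : F -> F) (eta : flagK -> F)
    (phi psi : flagK -> flagK) :
  (forall y, exists x, eta x = y) ->
  (forall x, eta (r0K x) = s0 (eta x) /\ eta (r1K x) = s1 (eta x) /\
             eta (r2K x) = s2 (eta x)) ->
  commK phi ->
  (forall x y, eta x = eta y -> eta (phi x) = eta (phi y)) ->
  (forall x y, eta x = eta y -> eta (psi x) = eta (psi y)) ->
  (forall x, psi (phi x) = x) ->
  exists p : {perm F}, is_autX s0 s1 s2 p /\ forall x, p (eta x) = eta (phi x).
Proof.
move=> Hs He Hphi Wphi Wpsi Hpp.
have ex : forall y, exists x, eta x == y by move=> y; case: (Hs y) => x <-; exists x.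
pose f y := eta (phi (xchoose (ex y))).
have fE : forall x, f (eta x) = eta (phi x).
  by move=> x; apply: Wphi; apply/eqP; exact: (xchooseP (ex (eta x))).
have finj : injective f.
  move=> y1 y2; case: (Hs y1) => x1 <-; case: (Hs y2) => x2 <-; rewrite !fE.
  by move/Wpsi; rewrite !Hpp.
exists (perm finj); split; last by move=> x; rewrite permE fE.
apply/autX_step => y; case: (Hs y) => x <-; rewrite !permE.
case: (He x) => <- [<- <-]; rewrite !fE.
by case: (Hphi x) => -> [-> ->]; case: (He (phi x)) => -> [-> ->].
Qed.

Theorem theorem1 (Gamma : (flagK -> flagK) -> Prop)
    (F : finType) (s0 s1 s2 : F -> F) (eta : flagK -> F) :
  is_subgroup_AutK Gamma ->
  acts_without_fixed_cells Gamma ->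
  is_quotient_of_K Gamma s0 s1 s2 eta ->
  is_flag_map s0 s1 s2 ->
  polyhedral s0 s1 s2 ->
  on_torus s0 s1 s2 ->
  (n_vertex_orbits s0 s1 s2 <= 9)%N.
Proof.
case=> Hauts _ _ Hinv Hfree [Hsurj Hcomm Hiff] [Hinvol _ _ _] _ [[c Hc] _].
have Hinvol12 : forall x, s1 (s1 x) = x /\ s2 (s2 x) = x.
  by move=> x; case: (Hinvol x) => _ [-> ->].
pose col x := c (eta x).
have Hcol : forall i x, col (stp i x) = ~~ col x.
  move=> i x; case: (Hcomm x) => E0 [E1 E2].
  by case: i => [|[|i]] /=; rewrite /col ?E0 ?E1 ?E2; case: (Hc (eta x)).
have cK : forall g, Gamma g -> commK g by move=> g Gg; case: (Hauts g Gg).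
have Hg0 : forall g, Gamma g -> col (g x0) = col x0.
  move=> g Gg; rewrite /col; congr c; symmetry; apply/Hiff; by exists g.
have GT := gamma_tr cK Hcol Hg0 Hfree.
have wd_tr : forall u x y, eta x = eta y -> eta (tr u x) = eta (tr u y).
  move=> u x y /Hiff [g [Gg Hgy]]; case: (GT g Gg) => v Hv.
  apply/Hiff; exists g; split => //.
  by rewrite -Hgy !Hv !tr_tr (addrC u.1) (addrC u.2).
have wd_H : forall x y, eta x = eta y -> eta (HK x) = eta (HK y).
  move=> x y /Hiff [g [Gg Hgy]]; case: (GT g Gg) => v Hv.
  case: (Hinv g Gg) => k [Gk Hk]; apply/Hiff; exists k; split => //.
  rewrite -Hgy Hv /HK Rf_tr.
  have := Hk (tr (Mv M32 v) (Rf M32 T32 x)); rewrite Hv tr_tr.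
  have -> : ((Mv M32 v).1 + v.1, (Mv M32 v).2 + v.2) = (0, 0).
    by rewrite /Mv /M32 /=; congr pair; lia.
  by rewrite tr0 => ->.
have Htr_aut : forall u, exists p, is_autX s0 s1 s2 p /\
    forall x, p (eta x) = eta (tr u x).
  move=> u; apply: (descend (psi := tr (- u.1, - u.2))) => //.
  - exact: commK_tr.
  - exact: wd_tr.
  - exact: wd_tr.
  - by move=> x; rewrite tr_tr !addrN tr0.
have HH_aut : exists p, is_autX s0 s1 s2 p /\ forall x, p (eta x) = eta (HK x).
  apply: (descend (psi := HK)) => //; [exact: HK_comm | exact: HH].
have Sub : [set vertex_aut_orbit s0 s1 s2 x | x : F] \subset
           [set vertex_aut_orbit s0 s1 s2 (eta (tflag i)) | i : 'I_9].
  apply/subsetP => O /imsetP [x _ ->]; case: (Hsurj x) => [[[a b] k]] <-.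
  have -> : vertex_aut_orbit s0 s1 s2 (eta (a, b, k)) =
            vertex_aut_orbit s0 s1 s2 (eta (0, 0, k)).
    case: (Htr_aut (a, b)) => p [Hp Hpe].
    by apply: (orbit_eq Hinvol12 Hp); rewrite Hpe /= !add0r inE connect0.
  have Hk : val k \in iota 0 144 by rewrite mem_iota ltn_ord.
  have := allP cover_ok _ Hk; rewrite /cov_ok.
  case: (nth _ coverK k) => [[[i e] pq] w] /and3P [Hi Hw /eqP Hact].
  rewrite ord144_val in Hact.
  apply/imsetP; exists (Ordinal Hi) => //=.
  set t := tflag i; set t' := (if e then HK t else t).
  have -> : vertex_aut_orbit s0 s1 s2 (eta (0, 0, k)) =
            vertex_aut_orbit s0 s1 s2 (eta (tr pq t')).
    apply: (orbit_eq Hinvol12 (autX_one s0 s1 s2)); rewrite perm1 -Hact.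
    exact: eta_act.
  have -> : vertex_aut_orbit s0 s1 s2 (eta (tr pq t')) =
            vertex_aut_orbit s0 s1 s2 (eta t').
    case: (Htr_aut pq) => p [Hp Hpe].
    by apply: (orbit_eq Hinvol12 Hp); rewrite Hpe inE connect0.
  rewrite /t'; clear Hact t'; case: e => //.
  case: HH_aut => p [Hp Hpe].
  by apply: (orbit_eq Hinvol12 Hp); rewrite Hpe inE connect0.
rewrite /n_vertex_orbits; apply: leq_trans (subset_leq_card Sub) _.
by apply: leq_trans (leq_imset_card _ _) _; rewrite card_ord.
Qed.
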